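(* Let $N\ge2$, $R>0$, let $g:[0,R]\to(0,\infty)$ be smooth, let $A,B,p,q$ be positive constants with $0<A<B$, and let $\kappa\in(0,1)$, all independent of $\epsilon$. For $\epsilon>0$ let $U_\epsilon$ be the unique solution of problem (N* ) described in the context, and let $\widetilde M=\sqrt{\frac{A(p+q)}{\max_{[0,R]}g}(\frac qp)^{\frac{p-q}{p+q}}}$. Then there are positive constants $\widetilde C_1,\widetilde C_2,\widetilde C_3$ independent of $\epsilon$ such that for all sufficiently small $\epsilon>0$, $$\int_{\epsilon^\kappa}^{R-\epsilon^\kappa}\frac1sU_\epsilon'(s)^2ds\le\widetilde C_1e^{-\frac{\widetilde M}{2\epsilon^{1-\kappa}}},\qquad \int_{R-\epsilon^\kappa}^RU_\epsilon'(s)^2ds\le\frac{\widetilde C_2}{\widetilde M\epsilon^3},$$ and $|\Lambda_{i,\epsilon}(R)|\le \widetilde C_3/\epsilon$ for $i=1,2$, where $$\Lambda_{1,\epsilon}(R)=\frac{\epsilon^2}{2}\int_0^R\frac{(N-2)g(s)+sg'(s)}{R^N}s^{N-1}U_\epsilon'(s)^2ds,$$ $$\Lambda_{2,\epsilon}(R)=-\frac{\epsilon^2}{2}g(\epsilon^\kappa)U_\epsilon'(\epsilon^\kappa)^2+\frac{\epsilon^2}{2}\int_{\epsilon^\kappa}^R\frac{2(N-1)g(s)+sg'(s)}{s}U_\epsilon'(s)^2ds.$$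
   Context: Problem (N* ): for $\epsilon>0$, find $U_\epsilon\in C^1([0,R])\cap C^\infty((0,R))$ such that for $r\in(0,R)$ $$\epsilon^2 g(r)\Big[U_\epsilon''(r)+\Big(\frac{N-1}{r}+\frac{g'(r)}{g(r)}\Big)U_\epsilon'(r)\Big]=\frac{R^N}{N}\Big(\frac{Ae^{pU_\epsilon(r)}}{\int_0^R s^{N-1}e^{pU_\epsilon(s)}ds}-\frac{Be^{-qU_\epsilon(r)}}{\int_0^R s^{N-1}e^{-qU_\epsilon(s)}ds}\Big),$$ together with $\int_0^R s^{N-1}U_\epsilon(s)\,ds=0$, $U_\epsilon'(0)=0$ and $U_\epsilon'(R)=\frac{R(A-B)}{\epsilon^2Ng(R)}$; it has a unique solution. *)

(* Defs.v *)
From Stdlib Require Import Reals Lra.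
From Coquelicot Require Import Coquelicot.
Open Scope R_scope.

(* g is smooth on [0,R]: it is (the restriction of) a C^infinity function
   on an open interval containing [0,R]. *)
Definition smooth_on_closed (g : R -> R) (a b : R) : Prop :=
  exists delta, 0 < delta /\
    forall (n : nat) (x : R), a - delta < x < b + delta ->
      ex_derive (Derive_n g n) x.

Definition smooth_on_open (U : R -> R) (a b : R) : Prop :=
  forall (n : nat) (x : R), a < x < b -> ex_derive (Derive_n U n) x.

(* U is C^1 on [a,b] with derivative dU (one-sided at the endpoints,
   dU continuous on [a,b]). *)
Definition C1_closed_with (U dU : R -> R) (a b : R) : Prop :=
  (forall x, a < x < b -> is_derive U x (dU x)) /\
  filterlim (fun y => (U y - U a) / (y - a)) (at_right a) (locally (dU a)) /\
  filterlim (fun y => (U y - U b) / (y - b)) (at_left b) (locally (dU b)) /\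
  (forall x, a <= x <= b ->
     filterlim dU (within (fun y => a <= y <= b) (locally x)) (locally (dU x))).

Definition solves_Nstar (N : nat) (Rr : R) (g : R -> R) (A B p q eps : R)
    (U : R -> R) : Prop :=
  (exists dU, C1_closed_with U dU 0 Rr /\
     dU 0 = 0 /\
     dU Rr = Rr * (A - B) / (eps ^ 2 * INR N * g Rr)) /\
  smooth_on_open U 0 Rr /\
  (forall r, 0 < r < Rr ->
     eps ^ 2 * g r *
       (Derive_n U 2 r + ((INR N - 1) / r + Derive g r / g r) * Derive U r)
     = Rr ^ N / INR N *
       (A * exp (p * U r) / RInt (fun s => s ^ (N - 1) * exp (p * U s)) 0 Rr
        - B * exp (- q * U r) / RInt (fun s => s ^ (N - 1) * exp (- q * U s)) 0 Rr)) /\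
  RInt (fun s => s ^ (N - 1) * U s) 0 Rr = 0.

Definition Lambda1 (N : nat) (Rr : R) (g U : R -> R) (eps : R) : R :=
  eps ^ 2 / 2 *
  RInt (fun s => ((INR N - 2) * g s + s * Derive g s) / Rr ^ N
                 * s ^ (N - 1) * (Derive U s) ^ 2) 0 Rr.

Definition Lambda2 (N : nat) (Rr : R) (g U : R -> R) (eps kappa : R) : R :=
  - (eps ^ 2 / 2) * g (Rpower eps kappa) * (Derive U (Rpower eps kappa)) ^ 2
  + eps ^ 2 / 2 *
    RInt (fun s => (2 * (INR N - 1) * g s + s * Derive g s) / s
                   * (Derive U s) ^ 2) (Rpower eps kappa) Rr.

(* Main.v *)
Require Import Defs.
From Stdlib Require Import Reals Lra Lia.
From Coquelicot Require Import Coquelicot.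
Open Scope R_scope.

Definition clamp (Rr x : R) := Rmax 0 (Rmin Rr x).

Lemma clamp_in Rr x : 0 <= Rr -> 0 <= clamp Rr x <= Rr.
Proof. intros H; unfold clamp, Rmax, Rmin; repeat destruct Rle_dec; lra. Qed.

Lemma clamp_id Rr x : 0 <= x <= Rr -> clamp Rr x = x.
Proof. intros H; unfold clamp, Rmax, Rmin; repeat destruct Rle_dec; lra. Qed.

Lemma clamp_lip Rr x y : 0 <= Rr -> Rabs (clamp Rr x - clamp Rr y) <= Rabs (x - y).
Proof.
  intros H; unfold clamp, Rmax, Rmin; repeat destruct Rle_dec;
  unfold Rabs; repeat destruct Rcase_abs; lra.
Qed.

Lemma within_clamp_cont (h : R -> R) Rr : 0 <= Rr ->
  (forall y, 0 <= y <= Rr -> filterlim h (within (fun z => 0 <= z <= Rr) (locally y)) (locally (h y))) ->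
  forall x, continuity_pt (fun s => h (clamp Rr s)) x.
Proof.
  intros HR H x. apply continuity_pt_filterlim.
  eapply filterlim_comp; [| apply H, clamp_in, HR].
  intros P [e He]. exists e. intros y Hy. apply He.
  - change (Rabs (clamp Rr y - clamp Rr x) < e).
    eapply Rle_lt_trans; [apply clamp_lip; lra|]. exact Hy.
  - apply clamp_in; lra.
Qed.

Lemma cont_within (h : R -> R) D y : continuity_pt h y ->
  filterlim h (within D (locally y)) (locally (h y)).
Proof.
  intros H. apply continuity_pt_filterlim in H.
  intros P HP. specialize (H P HP). destruct H as [e He]. exists e. intros z Hz _. apply He, Hz.
Qed.

Lemma mono_le f df a b : a <= b ->
  (forall x, a < x < b -> is_derive f x (df x)) ->
  (forall x, a < x < b -> 0 <= df x) ->
  (forall x, a <= x <= b -> continuity_pt f x) -> f a <= f b.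
Proof.
  intros Hab Hd Hp Hc.
  destruct (MVT_gen f a b (fun x => Rmax 0 (df x))) as [c [_ Hc']].
  - intros x Hx. rewrite Rmin_left, Rmax_right in Hx by lra.
    rewrite Rmax_right by (apply Hp; lra). apply Hd; lra.
  - intros x Hx. rewrite Rmin_left, Rmax_right in Hx by lra. apply Hc; lra.
  - assert (0 <= Rmax 0 (df c) * (b - a)).
    { apply Rmult_le_pos; [apply Rmax_l| lra]. }
    lra.
Qed.

Lemma mono_lt f df a b : a < b ->
  (forall x, a < x < b -> is_derive f x (df x)) ->
  (forall x, a < x < b -> 0 < df x) ->
  (forall x, a <= x <= b -> continuity_pt f x) -> f a < f b.
Proof.
  intros Hab Hd Hp Hc.
  set (m := (a + b) / 2). set (m' := (a + 3 * b) / 4).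
  assert (H1 : f a <= f m).
  { apply (mono_le f df); try (unfold m; lra).
    - intros; apply Hd; unfold m in *; lra.
    - intros; apply Rlt_le, Hp; unfold m in *; lra.
    - intros; apply Hc; unfold m in *; lra. }
  assert (H3 : f m' <= f b).
  { apply (mono_le f df); try (unfold m'; lra).
    - intros; apply Hd; unfold m' in *; lra.
    - intros; apply Rlt_le, Hp; unfold m' in *; lra.
    - intros; apply Hc; unfold m' in *; lra. }
  assert (H2 : f m < f m').
  { apply (incr_function f (Finite a) (Finite b) df); simpl; try (intros; apply Hd; lra);
      try (intros; apply Hp; lra); unfold m, m'; lra. }
  lra.
Qed.

Lemma deriv_zero_min f c l a b : a < c < b -> is_derive f c l ->
  (forall x, a < x < b -> f c <= f x) -> l = 0.
Proof.
  intros Hc Hd Hm. apply is_derive_Reals in Hd.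
  pose (pr := exist (fun l => derivable_pt_lim f c l) l Hd : derivable_pt f c).
  assert (E := deriv_minimum f a b c pr (proj1 Hc) (proj2 Hc) (fun x h1 h2 => Hm x (conj h1 h2))).
  exact E.
Qed.

Definition Xf l1 p (U : R -> R) s := l1 * exp (p * U s).
Definition Yf l2 q (U : R -> R) s := l2 * exp (- q * U s).
Definition phif l1 l2 p q U s := Yf l2 q U s - Xf l1 p U s.
Definition vfun n eps (g dU : R -> R) s := - eps ^ 2 * s ^ (S n) * g s * dU s.

Lemma vder n eps g dg U dU d2U l1 l2 p q x : 0 < x ->
  is_derive g x (dg x) -> is_derive dU x (d2U x) -> 0 < g x ->
  eps ^ 2 * g x * (d2U x + ((INR (S (S n)) - 1) / x + dg x / g x) * dU x)
    = Xf l1 p U x - Yf l2 q U x ->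
  is_derive (vfun n eps g dU) x (x ^ (S n) * phif l1 l2 p q U x).
Proof.
  intros Hx Hg HdU Hgp Hode. unfold vfun.
  auto_derive.
  - split; [eexists; exact Hg|split; [eexists; exact HdU|exact I]].
  - replace (Derive (fun x0 => g x0) x) with (dg x) by (symmetry; apply is_derive_unique; exact Hg).
    replace (Derive (fun x0 => dU x0) x) with (d2U x) by (symmetry; apply is_derive_unique; exact HdU).
    change (match n with 0%nat => 1 | S _ => INR n + 1 end) with (INR (S n)).
    assert (Hp : phif l1 l2 p q U x = - (eps ^ 2 * g x * (d2U x + ((INR (S (S n)) - 1) / x + dg x / g x) * dU x))).
    { unfold phif. rewrite Hode. ring. }
    rewrite Hp. rewrite (S_INR (S n)). simpl pow. field. lra.
Qed.

Lemma phider l1 l2 p q U dU x : is_derive U x (dU x) ->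
  is_derive (phif l1 l2 p q U) x (- (p * Xf l1 p U x + q * Yf l2 q U x) * dU x).
Proof.
  intros HU. unfold phif, Xf, Yf. auto_derive.
  - split; [eexists; exact HU|split; [eexists; exact HU|exact I]].
  - replace (Derive (fun x0 => U x0) x) with (dU x) by (symmetry; apply is_derive_unique; exact HU). ring.
Qed.

Lemma cmul (f g : R -> R) x : continuous f x -> continuous g x -> continuous (fun y => f y * g y) x.
Proof. intros; apply (continuous_mult f g x); auto. Qed.
Lemma cplus (f g : R -> R) x : continuous f x -> continuous g x -> continuous (fun y => f y + g y) x.
Proof. intros; apply (continuous_plus f g x); auto. Qed.
Lemma copp (f : R -> R) x : continuous f x -> continuous (fun y => - f y) x.
Proof. intros; apply (continuous_opp f x); auto. Qed.
Lemma cminus (f g : R -> R) x : continuous f x -> continuous g x -> continuous (fun y => f y - g y) x.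
Proof. intros; apply cplus; auto; apply copp; auto. Qed.
Lemma cconst (c x : R) : continuous (fun _ : R => c) x.
Proof. apply continuous_const. Qed.
Lemma cid (x : R) : continuous (fun y : R => y) x.
Proof. apply continuous_id. Qed.
Lemma cpow (f : R -> R) n x : continuous f x -> continuous (fun y => f y ^ n) x.
Proof. intros H; induction n; simpl. apply cconst. apply cmul; auto. Qed.
Lemma cinv (f : R -> R) x : continuous f x -> f x <> 0 -> continuous (fun y => / f y) x.
Proof. intros; apply continuous_Rinv_comp; auto. Qed.
Lemma cexp (f : R -> R) x : continuous f x -> continuous (fun y => exp (f y)) x.
Proof. intros; apply continuous_exp_comp; auto. Qed.
Lemma cpt (f : R -> R) x : continuity_pt f x -> continuous f x.
Proof. intros H; apply continuity_pt_filterlim; auto. Qed.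
Lemma ptc (f : R -> R) x : continuous f x -> continuity_pt f x.
Proof. intros H; apply continuity_pt_filterlim; auto. Qed.
Lemma ccomp (f g : R -> R) x : continuous f x -> continuous g (f x) -> continuous (fun y => g (f y)) x.
Proof. intros; apply (continuous_comp f g); auto. Qed.

Lemma clamp_cont Rr x : 0 <= Rr -> continuous (clamp Rr) x.
Proof.
  intros HR. apply cpt. apply (within_clamp_cont (fun z => z) Rr HR).
  intros y _. apply cont_within. apply ptc, cid.
Qed.

Record Hyp (n : nat) (Rr eps l1 l2 p q : R) (g dg U dU d2U : R -> R) : Prop := {
  hR : 0 < Rr; heps : 0 < eps; hl1 : 0 < l1; hl2 : 0 < l2; hp : 0 < p; hq : 0 < q;
  hgpos : forall x, 0 <= x <= Rr -> 0 < g x;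
  hgc : forall x, 0 <= x <= Rr -> continuity_pt g x;
  hgd : forall x, 0 < x < Rr -> is_derive g x (dg x);
  hU : forall x, 0 < x < Rr -> is_derive U x (dU x);
  hdU : forall x, 0 < x < Rr -> is_derive dU x (d2U x);
  hdUc : forall x, continuity_pt (fun s => dU (clamp Rr s)) x;
  hode : forall x, 0 < x < Rr -> eps ^ 2 * g x * (d2U x + ((INR (S (S n)) - 1) / x + dg x / g x) * dU x)
                                  = Xf l1 p U x - Yf l2 q U x;
  hvR : 0 < vfun n eps g dU Rr }.

Lemma mono_gt f df a b : a < b ->
  (forall x, a < x < b -> is_derive f x (df x)) ->
  (forall x, a < x < b -> df x < 0) ->
  (forall x, a <= x <= b -> continuity_pt f x) -> f b < f a.
Proof.
  intros Hab Hd Hn Hc.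
  assert (- f a < - f b); [|lra].
  apply (mono_lt (fun x => - f x) (fun x => - df x)); auto.
  - intros x Hx; exact (is_derive_opp f x (df x) (Hd x Hx)).
  - intros x Hx; specialize (Hn x Hx); lra.
  - intros; apply continuity_pt_opp; auto.
Qed.


Definition vc n Rr eps g dU s := vfun n eps g dU (clamp Rr s).

Lemma vc_cont n Rr eps l1 l2 p q g dg U dU d2U :
  Hyp n Rr eps l1 l2 p q g dg U dU d2U -> forall x, continuity_pt (vc n Rr eps g dU) x.
Proof.
  intros H x. apply ptc. unfold vc, vfun.
  assert (HR := hR _ _ _ _ _ _ _ _ _ _ _ _ H).
  apply cmul; [apply cmul; [apply cmul|]|].
  - apply cconst.
  - apply cpow, clamp_cont; lra.
  - apply ccomp; [apply clamp_cont; lra|]. apply cpt, (hgc _ _ _ _ _ _ _ _ _ _ _ _ H), clamp_in; lra.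
  - apply cpt, (hdUc _ _ _ _ _ _ _ _ _ _ _ _ H).
Qed.

Ltac dH H := destruct H as [HR Heps Hl1 Hl2 Hp Hq Hgpos Hgc Hgd HU HdU HdUc Hode HvR].

Lemma vc_eq n Rr eps g dU x : 0 <= Rr -> 0 <= x <= Rr -> vc n Rr eps g dU x = vfun n eps g dU x.
Proof. intros; unfold vc; rewrite clamp_id; auto. Qed.

Lemma vc_der n Rr eps l1 l2 p q g dg U dU d2U :
  Hyp n Rr eps l1 l2 p q g dg U dU d2U -> forall x, 0 < x < Rr ->
  is_derive (vc n Rr eps g dU) x (x ^ (S n) * phif l1 l2 p q U x).
Proof.
  intros H x Hx. pose proof H as H'. dH H.
  apply is_derive_ext_loc with (f := vfun n eps g dU).
  - assert (Hd : 0 < Rmin x (Rr - x)) by (apply Rmin_glb_lt; lra).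
    exists (mkposreal _ Hd). intros y Hy. change (Rabs (y - x) < Rmin x (Rr - x)) in Hy.
    assert (Hy1 := Rmin_l x (Rr - x)). assert (Hy2 := Rmin_r x (Rr - x)).
    apply Rabs_def2 in Hy.
    rewrite vc_eq; lra.
  - apply vder with (dg := dg) (d2U := d2U); try apply Hgd; try apply HdU; try apply Hgpos; try lra.
    apply Hode; lra.
Qed.

Lemma dU_v n Rr eps l1 l2 p q g dg U dU d2U :
  Hyp n Rr eps l1 l2 p q g dg U dU d2U -> forall x, 0 < x < Rr ->
  dU x = - vfun n eps g dU x / (eps ^ 2 * x ^ (S n) * g x).
Proof.
  intros H x Hx. dH H. assert (0 < g x) by (apply Hgpos; lra).
  assert (0 < x ^ S n) by (apply pow_lt; lra).
  unfold vfun. field. repeat split; try lra; apply pow_nonzero; lra.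
Qed.

Lemma phi_der n Rr eps l1 l2 p q g dg U dU d2U :
  Hyp n Rr eps l1 l2 p q g dg U dU d2U -> forall x, 0 < x < Rr ->
  is_derive (phif l1 l2 p q U) x
    ((p * Xf l1 p U x + q * Yf l2 q U x) * vfun n eps g dU x / (eps ^ 2 * x ^ (S n) * g x)).
Proof.
  intros H x Hx. pose proof (dU_v _ _ _ _ _ _ _ _ _ _ _ _ H x Hx) as E. dH H.
  eapply is_derive_ext; [intros; reflexivity|].
  replace ((p * Xf l1 p U x + q * Yf l2 q U x) * vfun n eps g dU x / (eps ^ 2 * x ^ S n * g x))
    with (- (p * Xf l1 p U x + q * Yf l2 q U x) * dU x).
  - apply phider, HU; lra.
  - rewrite E. unfold Rdiv. ring.
Qed.

Lemma XY_pos l1 l2 p q U x : 0 < l1 -> 0 < l2 -> 0 < p -> 0 < q -> 0 < p * Xf l1 p U x + q * Yf l2 q U x.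
Proof.
  intros. unfold Xf, Yf. assert (0 < exp (p * U x)) by apply exp_pos.
  assert (0 < exp (- q * U x)) by apply exp_pos.
  apply Rplus_lt_0_compat; repeat apply Rmult_lt_0_compat; auto.
Qed.

Lemma cont_of_der (f : R -> R) x l : is_derive f x l -> continuity_pt f x.
Proof. intros H. apply ptc. apply (ex_derive_continuous (K := R_AbsRing) (V := R_NormedModule)). exists l; exact H. Qed.

Lemma v_nonneg n Rr eps l1 l2 p q g dg U dU d2U :
  Hyp n Rr eps l1 l2 p q g dg U dU d2U -> forall x, 0 <= x <= Rr -> 0 <= vc n Rr eps g dU x.
Proof.
  intros H. pose proof (vc_cont _ _ _ _ _ _ _ _ _ _ _ _ H) as Hc.
  pose proof (vc_der _ _ _ _ _ _ _ _ _ _ _ _ H) as Hvd.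
  pose proof (phi_der _ _ _ _ _ _ _ _ _ _ _ _ H) as Hpd.
  pose proof H as H'. dH H.
  set (v := vc n Rr eps g dU) in *.
  destruct (continuity_ab_min v 0 Rr) as [rm [Hmin Hrm]]; [lra| intros; apply Hc|].
  intros x Hx. apply Rnot_lt_le. intros Hneg.
  assert (Hvm : v rm < 0) by (specialize (Hmin x Hx); lra).
  assert (Hv0 : v 0 = 0).
  { unfold v; rewrite vc_eq by lra. unfold vfun. simpl. ring. }
  assert (HvR' : v Rr = vfun n eps g dU Rr) by (unfold v; rewrite vc_eq; lra).
  assert (Hrm' : 0 < rm < Rr).
  { split; apply Rnot_le_lt; intros Hle.
    - assert (rm = 0) by lra. subst rm. lra.
    - assert (rm = Rr) by lra. subst rm. lra. }
  assert (Hphi0 : phif l1 l2 p q U rm = 0).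
  { assert (E := deriv_zero_min v rm _ 0 Rr Hrm' (Hvd rm Hrm') (fun y hy => Hmin y (conj (Rlt_le _ _ (proj1 hy)) (Rlt_le _ _ (proj2 hy))))).
    apply Rmult_integral in E. destruct E as [E|E]; auto.
    exfalso. apply (pow_nonzero rm (S n)); [lra|auto]. }
  destruct (proj1 (continuity_pt_filterlim v rm) (Hc rm) (fun z => z < 0)) as [d Hd].
  { assert (Hd : 0 < - v rm) by lra. exists (mkposreal _ Hd). intros z Hz.
    change (Rabs (z - v rm) < - v rm) in Hz. apply Rabs_def2 in Hz. lra. }
  set (b := Rmin (rm + d / 2) ((rm + Rr) / 2)).
  assert (Hb1 := Rmin_l (rm + d / 2) ((rm + Rr) / 2)).
  assert (Hb2 := Rmin_r (rm + d / 2) ((rm + Rr) / 2)).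
  assert (Hd0 := cond_pos d).
  assert (Hb3 : rm < b) by (apply Rmin_glb_lt; lra).
  assert (Hneg' : forall y, rm <= y <= b -> v y < 0).
  { intros y Hy. apply Hd. change (Rabs (y - rm) < d). rewrite Rabs_right; fold b in Hb1; lra. }
  fold b in Hb1, Hb2.
  assert (Hphi : forall y, rm < y <= b -> phif l1 l2 p q U y < 0).
  { intros y Hy. rewrite <- Hphi0.
    apply (mono_gt _ (fun x => (p * Xf l1 p U x + q * Yf l2 q U x) * vfun n eps g dU x / (eps ^ 2 * x ^ (S n) * g x))).
    - lra.
    - intros; apply Hpd; lra.
    - intros z Hz. assert (0 < p * Xf l1 p U z + q * Yf l2 q U z) by (apply XY_pos; auto).
      assert (vfun n eps g dU z < 0) by (specialize (Hneg' z ltac:(lra)); unfold v in Hneg'; rewrite vc_eq in Hneg'; lra).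
      assert (0 < g z) by (apply Hgpos; lra). assert (0 < z ^ S n) by (apply pow_lt; lra).
      assert (0 < eps ^ 2) by (apply pow_lt; lra).
      apply Rmult_lt_reg_r with (eps ^ 2 * z ^ S n * g z); [apply Rmult_lt_0_compat; [apply Rmult_lt_0_compat|]; lra|].
      unfold Rdiv. rewrite Rmult_assoc, Rinv_l, Rmult_0_l, Rmult_1_r; [nra|].
      apply Rgt_not_eq. apply Rmult_lt_0_compat; [apply Rmult_lt_0_compat|]; lra.
    - intros z Hz. apply (cont_of_der _ _ _ (Hpd z ltac:(lra))). }
  assert (v b < v rm).
  { apply (mono_gt _ (fun x => x ^ (S n) * phif l1 l2 p q U x)).
    - lra.
    - intros; apply Hvd; lra.
    - intros z Hz. assert (0 < z ^ S n) by (apply pow_lt; lra).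
      specialize (Hphi z ltac:(lra)). nra.
    - intros; apply Hc. }
  specialize (Hmin b ltac:(lra)). lra.
Qed.

Lemma phi_der_nonneg n Rr eps l1 l2 p q g dg U dU d2U :
  Hyp n Rr eps l1 l2 p q g dg U dU d2U -> forall x, 0 < x < Rr ->
  0 <= (p * Xf l1 p U x + q * Yf l2 q U x) * vfun n eps g dU x / (eps ^ 2 * x ^ (S n) * g x).
Proof.
  intros H x Hx. pose proof (v_nonneg _ _ _ _ _ _ _ _ _ _ _ _ H x ltac:(lra)) as Hv.
  rewrite vc_eq in Hv by (destruct H; lra). dH H.
  assert (0 < p * Xf l1 p U x + q * Yf l2 q U x) by (apply XY_pos; auto).
  assert (0 < g x) by (apply Hgpos; lra). assert (0 < x ^ S n) by (apply pow_lt; lra).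
  assert (0 < eps ^ 2) by (apply pow_lt; lra).
  unfold Rdiv. apply Rmult_le_pos; [apply Rmult_le_pos; lra|].
  apply Rlt_le, Rinv_0_lt_compat. apply Rmult_lt_0_compat; [apply Rmult_lt_0_compat|]; lra.
Qed.

Lemma phi_mono n Rr eps l1 l2 p q g dg U dU d2U :
  Hyp n Rr eps l1 l2 p q g dg U dU d2U -> forall a b, 0 < a -> a <= b -> b < Rr ->
  phif l1 l2 p q U a <= phif l1 l2 p q U b.
Proof.
  intros H a b Ha Hab Hb.
  apply (mono_le _ (fun x => (p * Xf l1 p U x + q * Yf l2 q U x) * vfun n eps g dU x / (eps ^ 2 * x ^ (S n) * g x))); auto.
  - intros; apply (phi_der _ _ _ _ _ _ _ _ _ _ _ _ H); lra.
  - intros; apply (phi_der_nonneg _ _ _ _ _ _ _ _ _ _ _ _ H); lra.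
  - intros z Hz. apply (cont_of_der _ _ _ (phi_der _ _ _ _ _ _ _ _ _ _ _ _ H z ltac:(lra))).
Qed.

Lemma phi_nonneg n Rr eps l1 l2 p q g dg U dU d2U :
  Hyp n Rr eps l1 l2 p q g dg U dU d2U -> forall x, 0 < x < Rr -> 0 <= phif l1 l2 p q U x.
Proof.
  intros H r0 Hr0. apply Rnot_lt_le. intros Hneg.
  pose proof (vc_cont _ _ _ _ _ _ _ _ _ _ _ _ H) as Hc.
  pose proof (vc_der _ _ _ _ _ _ _ _ _ _ _ _ H) as Hvd.
  pose proof (v_nonneg _ _ _ _ _ _ _ _ _ _ _ _ H r0 ltac:(lra)) as Hv.
  assert (Hv0 : vc n Rr eps g dU 0 = 0).
  { rewrite vc_eq by (destruct H; lra). unfold vfun. simpl. ring. }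
  assert (vc n Rr eps g dU r0 < vc n Rr eps g dU 0).
  { apply (mono_gt _ (fun x => x ^ (S n) * phif l1 l2 p q U x)).
    - lra.
    - intros; apply Hvd; lra.
    - intros z Hz. assert (0 < z ^ S n) by (apply pow_lt; lra).
      assert (phif l1 l2 p q U z <= phif l1 l2 p q U r0) by (apply (phi_mono _ _ _ _ _ _ _ _ _ _ _ _ H); lra).
      nra.
    - intros; apply Hc. }
  lra.
Qed.


Definition wf n l1 l2 p q U s := s ^ (S n) * phif l1 l2 p q U s.

Lemma wf_der n Rr eps l1 l2 p q g dg U dU d2U :
  Hyp n Rr eps l1 l2 p q g dg U dU d2U -> forall x, 0 < x < Rr ->
  is_derive (wf n l1 l2 p q U) x
   (INR (S n) * x ^ n * phif l1 l2 p q U x +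
    (p * Xf l1 p U x + q * Yf l2 q U x) * vfun n eps g dU x / (eps ^ 2 * g x)).
Proof.
  intros H x Hx. pose proof (phi_der _ _ _ _ _ _ _ _ _ _ _ _ H x Hx) as Hd.
  assert (0 < g x) by (apply (hgpos _ _ _ _ _ _ _ _ _ _ _ _ H); lra).
  assert (0 < x ^ S n) by (apply pow_lt; lra). assert (0 < eps) by (apply (heps _ _ _ _ _ _ _ _ _ _ _ _ H)).
  unfold wf.
  assert (Hpw : is_derive (fun s => s ^ S n) x (INR (S n) * x ^ n)).
  { auto_derive; auto. simpl pred. change (match n with 0%nat => 1 | S _ => INR n + 1 end) with (INR (S n)). ring. }
  eapply is_derive_ext; [intros; reflexivity|].
  replace (INR (S n) * x ^ n * phif l1 l2 p q U x +
    (p * Xf l1 p U x + q * Yf l2 q U x) * vfun n eps g dU x / (eps ^ 2 * g x))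
   with (plus (mult (INR (S n) * x ^ n) (phif l1 l2 p q U x))
              (mult (x ^ S n) ((p * Xf l1 p U x + q * Yf l2 q U x) * vfun n eps g dU x / (eps ^ 2 * x ^ (S n) * g x)))).
  - apply (is_derive_mult (fun s => s ^ S n) (phif l1 l2 p q U)); auto.
    intros; apply Rmult_comm.
  - unfold plus, mult; simpl. field. repeat split; try lra. apply pow_nonzero; lra.
Qed.

Lemma Derive_eq (f : R -> R) x l : is_derive f x l -> Derive (fun y : R => f y) x = l.
Proof. intros H; apply is_derive_unique; exact H. Qed.

Definition Ef n eps Mt (g dU : R -> R) l1 l2 p q U s :=
  (wf n l1 l2 p q U s) ^ 2 - (Mt / eps) ^ 2 * (vfun n eps g dU s) ^ 2.

Lemma v_exp_bound n Rr eps l1 l2 p q g dg U dU d2U Mt :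
  Hyp n Rr eps l1 l2 p q g dg U dU d2U -> 0 < Mt ->
  (forall x, 0 < x < Rr -> Mt ^ 2 * g x <= p * Xf l1 p U x + q * Yf l2 q U x) ->
  forall x, 0 <= x <= Rr ->
  vc n Rr eps g dU x <= vfun n eps g dU Rr * exp (- (Mt / eps) * (Rr - x)).
Proof.
  intros H HMt Hk.
  pose proof (vc_cont _ _ _ _ _ _ _ _ _ _ _ _ H) as Hc.
  pose proof (vc_der _ _ _ _ _ _ _ _ _ _ _ _ H) as Hvd.
  pose proof (v_nonneg _ _ _ _ _ _ _ _ _ _ _ _ H) as Hvn.
  pose proof (phi_nonneg _ _ _ _ _ _ _ _ _ _ _ _ H) as Hpn.
  pose proof (wf_der _ _ _ _ _ _ _ _ _ _ _ _ H) as Hwd.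
  pose proof H as H'. dH H.
  set (mu := Mt / eps).
  assert (Hmu : 0 < mu) by (unfold mu; apply Rdiv_lt_0_compat; lra).
  set (v := vfun n eps g dU).
  set (w := wf n l1 l2 p q U).
  set (dE := fun x => 2 * w x * (INR (S n) * x ^ n * phif l1 l2 p q U x +
    (p * Xf l1 p U x + q * Yf l2 q U x) * v x / (eps ^ 2 * g x)) - 2 * mu ^ 2 * v x * (x ^ S n * phif l1 l2 p q U x)).
  assert (HEd : forall x, 0 < x < Rr -> is_derive (Ef n eps Mt g dU l1 l2 p q U) x (dE x)).
  { intros x Hx. unfold Ef, dE. fold mu.
    assert (Hvd' : is_derive v x (x ^ S n * phif l1 l2 p q U x)).
    { apply is_derive_ext_loc with (f := vc n Rr eps g dU); [|apply Hvd; auto].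
      assert (Hd : 0 < Rmin x (Rr - x)) by (apply Rmin_glb_lt; lra).
      exists (mkposreal _ Hd). intros y Hy. change (Rabs (y - x) < Rmin x (Rr - x)) in Hy.
      assert (Hy1 := Rmin_l x (Rr - x)). assert (Hy2 := Rmin_r x (Rr - x)).
      apply Rabs_def2 in Hy. unfold v. rewrite vc_eq; lra. }
    specialize (Hwd x Hx). fold w v in Hwd. unfold w, v in *.
    auto_derive.
    - split; [eexists; exact Hwd|split; [eexists; exact Hvd'|exact I]].
    - rewrite (Derive_eq _ _ _ Hwd), (Derive_eq _ _ _ Hvd'). ring. }
  assert (HdE : forall x, 0 < x < Rr -> 0 <= dE x).
  { intros x Hx. unfold dE.
    assert (0 < g x) by (apply Hgpos; lra). assert (0 < x ^ S n) by (apply pow_lt; lra).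
    assert (0 <= x ^ n) by (apply pow_le; lra).
    assert (0 < eps ^ 2) by (apply pow_lt; lra).
    assert (Hv : 0 <= v x) by (specialize (Hvn x ltac:(lra)); unfold v; rewrite vc_eq in Hvn; lra).
    assert (Hp0 := Hpn x Hx).
    assert (Hw : 0 <= w x) by (unfold w, wf; apply Rmult_le_pos; lra).
    assert (HINR : 0 < INR (S n)) by apply lt_0_INR, Nat.lt_0_succ.
    assert (Hk' := Hk x Hx).
    replace (2 * w x * (INR (S n) * x ^ n * phif l1 l2 p q U x +
      (p * Xf l1 p U x + q * Yf l2 q U x) * v x / (eps ^ 2 * g x)) -
      2 * mu ^ 2 * v x * (x ^ S n * phif l1 l2 p q U x))
     with (2 * w x * (INR (S n) * x ^ n * phif l1 l2 p q U x +
      v x * ((p * Xf l1 p U x + q * Yf l2 q U x) - Mt ^ 2 * g x) / (eps ^ 2 * g x))).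
    2:{ unfold w, wf, mu. field. lra. }
    apply Rmult_le_pos; [lra|]. apply Rplus_le_le_0_compat.
    - repeat apply Rmult_le_pos; lra.
    - unfold Rdiv. apply Rmult_le_pos; [apply Rmult_le_pos; lra|].
      apply Rlt_le, Rinv_0_lt_compat, Rmult_lt_0_compat; lra. }
  assert (HEc : forall x, 0 < x < Rr -> continuity_pt (Ef n eps Mt g dU l1 l2 p q U) x).
  { intros x Hx. apply (cont_of_der _ _ _ (HEd x Hx)). }
  assert (HEpos : forall r, 0 < r < Rr -> 0 <= Ef n eps Mt g dU l1 l2 p q U r).
  { intros r Hr. apply Rnot_lt_le. intros HE.
    set (eta := - Ef n eps Mt g dU l1 l2 p q U r).
    assert (Heta : 0 < eta) by (unfold eta; lra).
    assert (Hv0 : vc n Rr eps g dU 0 = 0).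
    { rewrite vc_eq by lra. unfold vfun. simpl. ring. }
    assert (Hb : 0 < sqrt eta / mu) by (apply Rdiv_lt_0_compat; [apply sqrt_lt_R0|]; lra).
    destruct (proj1 (continuity_pt_filterlim _ 0) (Hc 0) (fun z => Rabs z < sqrt eta / mu)) as [d Hd].
    { exists (mkposreal _ Hb). intros z Hz. change (Rabs (z - vc n Rr eps g dU 0) < sqrt eta / mu) in Hz.
      rewrite Hv0, Rminus_0_r in Hz. exact Hz. }
    set (s := Rmin (d / 2) (r / 2)).
    assert (Hs1 := Rmin_l (d / 2) (r / 2)). assert (Hs2 := Rmin_r (d / 2) (r / 2)).
    assert (Hd0 := cond_pos d).
    assert (Hs0 : 0 < s) by (apply Rmin_glb_lt; lra). fold s in Hs1, Hs2.
    assert (Hvs : Rabs (vc n Rr eps g dU s) < sqrt eta / mu).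
    { apply Hd. change (Rabs (s - 0) < d). rewrite Rminus_0_r, Rabs_right; lra. }
    rewrite vc_eq in Hvs by lra.
    assert (HEs : Ef n eps Mt g dU l1 l2 p q U s <= Ef n eps Mt g dU l1 l2 p q U r).
    { apply (mono_le _ dE); try lra.
      - intros; apply HEd; lra.
      - intros; apply HdE; lra.
      - intros; apply HEc; lra. }
    unfold Ef in HEs. fold mu in HEs.
    assert (Hsq : (mu * Rabs (vfun n eps g dU s)) ^ 2 < eta).
    { assert (0 <= mu * Rabs (vfun n eps g dU s)) by (apply Rmult_le_pos; [lra|apply Rabs_pos]).
      assert (mu * Rabs (vfun n eps g dU s) < sqrt eta).
      { apply Rmult_lt_reg_r with (/ mu); [apply Rinv_0_lt_compat; lra|].
        replace (mu * Rabs (vfun n eps g dU s) * / mu) with (Rabs (vfun n eps g dU s)) by (field; lra).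
        exact Hvs. }
      rewrite <- (sqrt_sqrt eta) by lra. simpl. rewrite Rmult_1_r.
      apply Rmult_le_0_lt_compat; lra. }
    rewrite Rpow_mult_distr, pow2_abs in Hsq.
    assert (0 <= wf n l1 l2 p q U s ^ 2) by apply pow2_ge_0.
    unfold eta in Hsq. fold mu in Hsq. unfold Ef in Hsq. fold mu in Hsq. lra. }
  assert (Hwv : forall x, 0 < x < Rr -> mu * v x <= w x).
  { intros x Hx. specialize (HEpos x Hx). unfold Ef in HEpos. fold mu v w in HEpos.
    assert (Hv : 0 <= v x) by (specialize (Hvn x ltac:(lra)); unfold v; rewrite vc_eq in Hvn; lra).
    assert (Hw : 0 <= w x) by (unfold w, wf; apply Rmult_le_pos; [apply pow_le; lra|apply Hpn; auto]).
    apply Rnot_lt_le. intros Hlt.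
    assert (w x ^ 2 < (mu * v x) ^ 2) by (simpl; nra).
    rewrite Rpow_mult_distr in H. lra. }
  intros x Hx.
  assert (HG : vc n Rr eps g dU x * exp (- mu * x) <= vc n Rr eps g dU Rr * exp (- mu * Rr)).
  { apply (mono_le (fun s => vc n Rr eps g dU s * exp (- mu * s)) (fun s => (s ^ S n * phif l1 l2 p q U s - mu * vc n Rr eps g dU s) * exp (- mu * s)) x Rr); try lra.
    - intros s Hs. specialize (Hvd s ltac:(lra)).
      auto_derive.
      + eexists; exact Hvd.
      + rewrite (Derive_eq _ _ _ Hvd). ring.
    - intros s Hs. apply Rmult_le_pos; [|apply Rlt_le, exp_pos].
      specialize (Hwv s ltac:(lra)). unfold w, wf, v in Hwv. rewrite vc_eq; lra.
    - intros s Hs. apply ptc, cmul; [apply cpt, Hc|]. apply cexp, cmul; [apply cconst|apply cid]. }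
  rewrite (vc_eq _ _ _ _ _ Rr) in HG by lra.
  replace (- mu * (Rr - x)) with (- mu * Rr + mu * x) by ring.
  rewrite exp_plus.
  assert (E1 : exp (- mu * x) * exp (mu * x) = 1) by (rewrite <- exp_plus; replace (- mu * x + mu * x) with 0 by ring; apply exp_0).
  assert (0 < exp (mu * x)) by apply exp_pos.
  replace (vc n Rr eps g dU x) with (vc n Rr eps g dU x * exp (- mu * x) * exp (mu * x))
    by (rewrite Rmult_assoc, E1; ring).
  rewrite <- Rmult_assoc. apply Rmult_le_compat_r. lra. exact HG.
Qed.

Lemma v_le_phi n Rr eps l1 l2 p q g dg U dU d2U :
  Hyp n Rr eps l1 l2 p q g dg U dU d2U -> forall s, 0 < s < Rr ->
  vc n Rr eps g dU s <= s ^ S n * phif l1 l2 p q U s * s.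
Proof.
  intros H s Hs.
  pose proof (vc_cont _ _ _ _ _ _ _ _ _ _ _ _ H) as Hc.
  pose proof (vc_der _ _ _ _ _ _ _ _ _ _ _ _ H) as Hvd.
  pose proof (phi_nonneg _ _ _ _ _ _ _ _ _ _ _ _ H) as Hpn.
  assert (Hv0 : vc n Rr eps g dU 0 = 0).
  { rewrite vc_eq by (destruct H; lra). unfold vfun. simpl. ring. }
  set (K := s ^ S n * phif l1 l2 p q U s).
  assert (K * 0 - vc n Rr eps g dU 0 <= K * s - vc n Rr eps g dU s); [|lra].
  apply (mono_le (fun t => K * t - vc n Rr eps g dU t) (fun t => K - t ^ S n * phif l1 l2 p q U t)); try lra.
  - intros t Ht. specialize (Hvd t ltac:(lra)). auto_derive.
    + eexists; exact Hvd.
    + rewrite (Derive_eq _ _ _ Hvd). ring.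
  - intros t Ht. unfold K.
    assert (phif l1 l2 p q U t <= phif l1 l2 p q U s) by (apply (phi_mono _ _ _ _ _ _ _ _ _ _ _ _ H); lra).
    assert (t ^ S n <= s ^ S n) by (apply pow_incr; lra).
    assert (0 <= phif l1 l2 p q U t) by (apply Hpn; lra).
    assert (0 <= t ^ S n) by (apply pow_le; lra). nra.
  - intros t Ht. apply ptc, cminus; [apply cmul; [apply cconst|apply cid]|apply cpt, Hc].
Qed.

Lemma phi_quarter n Rr eps l1 l2 p q g dg U dU d2U :
  Hyp n Rr eps l1 l2 p q g dg U dU d2U ->
  (Rr / 4) ^ S n * phif l1 l2 p q U (Rr / 4) * (Rr / 4) <= vc n Rr eps g dU (Rr / 2).
Proof.
  intros H. assert (HR := hR _ _ _ _ _ _ _ _ _ _ _ _ H).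
  pose proof (vc_cont _ _ _ _ _ _ _ _ _ _ _ _ H) as Hc.
  pose proof (vc_der _ _ _ _ _ _ _ _ _ _ _ _ H) as Hvd.
  pose proof (phi_nonneg _ _ _ _ _ _ _ _ _ _ _ _ H) as Hpn.
  pose proof (v_nonneg _ _ _ _ _ _ _ _ _ _ _ _ H (Rr / 4) ltac:(lra)) as Hvn.
  set (K := (Rr / 4) ^ S n * phif l1 l2 p q U (Rr / 4)).
  assert (vc n Rr eps g dU (Rr / 4) - K * (Rr / 4) <= vc n Rr eps g dU (Rr / 2) - K * (Rr / 2)).
  2:{ assert (0 <= K) by (unfold K; apply Rmult_le_pos; [apply pow_le; lra|apply Hpn; lra]). nra. }
  apply (mono_le (fun t => vc n Rr eps g dU t - K * t) (fun t => t ^ S n * phif l1 l2 p q U t - K)); try lra.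
  - intros t Ht. specialize (Hvd t ltac:(lra)). auto_derive.
    + eexists; exact Hvd.
    + rewrite (Derive_eq _ _ _ Hvd). ring.
  - intros t Ht. unfold K.
    assert (phif l1 l2 p q U (Rr / 4) <= phif l1 l2 p q U t) by (apply (phi_mono _ _ _ _ _ _ _ _ _ _ _ _ H); lra).
    assert ((Rr / 4) ^ S n <= t ^ S n) by (apply pow_incr; lra).
    assert (0 <= phif l1 l2 p q U (Rr / 4)) by (apply Hpn; lra).
    assert (0 <= (Rr / 4) ^ S n) by (apply pow_le; lra). nra.
  - intros t Ht. apply ptc, cminus; [apply cpt, Hc|apply cmul; [apply cconst|apply cid]].
Qed.

Lemma ratio_bounds n Rr eps l1 l2 p q g dg U dU d2U Mt :
  Hyp n Rr eps l1 l2 p q g dg U dU d2U -> 0 < Mt ->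
  (forall x, 0 < x < Rr -> Mt ^ 2 * g x <= p * Xf l1 p U x + q * Yf l2 q U x) ->
  forall s, 0 < s < Rr ->
  0 <= vfun n eps g dU s / s ^ S n /\
  (Rr / 4 <= s -> vfun n eps g dU s / s ^ S n <=
       vfun n eps g dU Rr / (Rr / 4) ^ S n * exp (- (Mt / eps) * (Rr - s))) /\
  (s <= Rr / 4 -> vfun n eps g dU s / s ^ S n <=
       s * (vfun n eps g dU Rr / (Rr / 4) ^ S (S n) * exp (- (Mt / eps) * (Rr / 2)))).
Proof.
  intros H HMt Hk s Hs.
  assert (HR := hR _ _ _ _ _ _ _ _ _ _ _ _ H).
  pose proof (v_exp_bound _ _ _ _ _ _ _ _ _ _ _ _ _ H HMt Hk) as Hexp.
  pose proof (v_nonneg _ _ _ _ _ _ _ _ _ _ _ _ H) as Hvn.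
  pose proof (phi_nonneg _ _ _ _ _ _ _ _ _ _ _ _ H) as Hpn.
  assert (Hsn : 0 < s ^ S n) by (apply pow_lt; lra).
  assert (Hvs : 0 <= vfun n eps g dU s) by (rewrite <- (vc_eq n Rr) by lra; apply Hvn; lra).
  split; [|split].
  - apply Rmult_le_pos; [lra|apply Rlt_le, Rinv_0_lt_compat; lra].
  - intros Hs4. assert (Hq : 0 < (Rr / 4) ^ S n) by (apply pow_lt; lra).
    assert (Hle : (Rr / 4) ^ S n <= s ^ S n) by (apply pow_incr; lra).
    specialize (Hexp s ltac:(lra)). rewrite vc_eq in Hexp by lra.
    assert (0 < exp (- (Mt / eps) * (Rr - s))) by apply exp_pos.
    apply Rle_trans with (vfun n eps g dU s / (Rr / 4) ^ S n).
    + unfold Rdiv. apply Rmult_le_compat_l; [lra|]. apply Rinv_le_contravar; lra.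
    + unfold Rdiv. rewrite Rmult_assoc, (Rmult_comm (/ _)), <- Rmult_assoc.
      apply Rmult_le_compat_r; [apply Rlt_le, Rinv_0_lt_compat; lra|].
      replace (- (Mt / eps) * (Rr - s)) with (- (Mt / eps) * (Rr - s)) by ring. lra.
  - intros Hs4.
    assert (H1 := v_le_phi _ _ _ _ _ _ _ _ _ _ _ _ H s Hs). rewrite vc_eq in H1 by lra.
    assert (H2 := phi_quarter _ _ _ _ _ _ _ _ _ _ _ _ H).
    assert (H3 : phif l1 l2 p q U s <= phif l1 l2 p q U (Rr / 4)) by (apply (phi_mono _ _ _ _ _ _ _ _ _ _ _ _ H); lra).
    assert (H4 := Hexp (Rr / 2) ltac:(lra)).
    replace (Rr - Rr / 2) with (Rr / 2) in H4 by field.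
    assert (Hq : 0 < (Rr / 4) ^ S n) by (apply pow_lt; lra).
    assert (Hps := Hpn s Hs).
    assert (E : vfun n eps g dU s / s ^ S n <= s * phif l1 l2 p q U s).
    { apply Rmult_le_reg_r with (s ^ S n); auto. unfold Rdiv.
      rewrite Rmult_assoc, Rinv_l by lra. lra. }
    assert (E2 : phif l1 l2 p q U (Rr / 4) <= vfun n eps g dU Rr / (Rr / 4) ^ S (S n) * exp (- (Mt / eps) * (Rr / 2))).
    { replace ((Rr / 4) ^ S (S n)) with ((Rr / 4) ^ S n * (Rr / 4)) by (simpl; ring).
      apply Rmult_le_reg_r with ((Rr / 4) ^ S n * (Rr / 4)); [nra|].
      replace (vfun n eps g dU Rr / ((Rr / 4) ^ S n * (Rr / 4)) * exp (- (Mt / eps) * (Rr / 2)) * ((Rr / 4) ^ S n * (Rr / 4)))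
        with (vfun n eps g dU Rr * exp (- (Mt / eps) * (Rr / 2))) by (field; lra).
      lra. }
    apply Rle_trans with (1 := E). apply Rmult_le_compat_l; lra.
Qed.

Lemma wamgm a b al be : 0 < a -> 0 < b -> 0 < al -> 0 < be -> al + be = 1 ->
  Rpower a al * Rpower b be <= al * a + be * b.
Proof.
  intros Ha Hb Hal Hbe Hs. unfold Rpower.
  rewrite <- exp_plus.
  set (La := ln a). set (Lb := ln b).
  set (G := al * La + be * Lb).
  assert (Ea : a = exp G * exp (be * (La - Lb))).
  { rewrite <- exp_plus. unfold G. replace (al * La + be * Lb + be * (La - Lb)) with La by (replace al with (1 - be) by lra; ring).
    unfold La; rewrite exp_ln; auto. }
  assert (Eb : b = exp G * exp (- al * (La - Lb))).
  { rewrite <- exp_plus. unfold G. replace (al * La + be * Lb + - al * (La - Lb)) with Lb by (replace al with (1 - be) by lra; ring).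
    unfold Lb; rewrite exp_ln; auto. }
  rewrite Ea at 1. rewrite Eb at 1. fold G.
  assert (H1 := exp_ineq1_le (be * (La - Lb))).
  assert (H2 := exp_ineq1_le (- al * (La - Lb))).
  assert (HG := exp_pos G).
  assert (al * exp (be * (La - Lb)) + be * exp (- al * (La - Lb)) >= 1).
  { assert (al * (1 + be * (La - Lb)) + be * (1 + - al * (La - Lb)) = 1) by (replace al with (1 - be) by lra; ring).
    nra. }
  nra.
Qed.

Lemma Rpower_exp t c : Rpower (exp t) c = exp (c * t).
Proof. unfold Rpower. rewrite ln_exp. reflexivity. Qed.

Lemma XY_const l1 l2 p q U x : 0 < l1 -> 0 < l2 -> 0 < p -> 0 < q ->
  Rpower (Xf l1 p U x) (q / (p + q)) * Rpower (Yf l2 q U x) (p / (p + q)) =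
  Rpower l1 (q / (p + q)) * Rpower l2 (p / (p + q)).
Proof.
  intros. unfold Xf, Yf.
  rewrite <- !Rpower_mult_distr by (try apply exp_pos; auto).
  rewrite !Rpower_exp.
  replace (Rpower l1 (q / (p + q)) * exp (q / (p + q) * (p * U x)) *
    (Rpower l2 (p / (p + q)) * exp (p / (p + q) * (- q * U x))))
   with (Rpower l1 (q / (p + q)) * Rpower l2 (p / (p + q)) * (exp (q / (p + q) * (p * U x)) * exp (p / (p + q) * (- q * U x)))) by ring.
  rewrite <- exp_plus.
  replace (q / (p + q) * (p * U x) + p / (p + q) * (- q * U x)) with 0 by (field; lra).
  rewrite exp_0. ring.
Qed.

Lemma XY_lower X Y p q : 0 < X -> 0 < Y -> 0 < p -> 0 < q ->
  (p + q) * Rpower (q / p) ((p - q) / (p + q)) * (Rpower X (q / (p + q)) * Rpower Y (p / (p + q)))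
  <= p * X + q * Y.
Proof.
  intros HX HY Hp Hq.
  assert (Hal : 0 < q / (p + q)) by (apply Rdiv_lt_0_compat; lra).
  assert (Hbe : 0 < p / (p + q)) by (apply Rdiv_lt_0_compat; lra).
  assert (Hqp : 0 < q / p) by (apply Rdiv_lt_0_compat; lra).
  assert (Hpq : 0 < p / q) by (apply Rdiv_lt_0_compat; lra).
  assert (H := wamgm (p / q * X) (q / p * Y) (q / (p + q)) (p / (p + q))
     ltac:(apply Rmult_lt_0_compat; lra) ltac:(apply Rmult_lt_0_compat; lra) Hal Hbe ltac:(field; lra)).
  rewrite <- !Rpower_mult_distr in H by lra.
  assert (E : Rpower (p / q) (q / (p + q)) * Rpower (q / p) (p / (p + q)) = Rpower (q / p) ((p - q) / (p + q))).
  { replace (p / q) with (/ (q / p)) by (field; lra).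
    unfold Rpower at 1. rewrite ln_Rinv by lra.
    replace (q / (p + q) * - ln (q / p)) with ((- (q / (p + q))) * ln (q / p)) by ring.
    fold (Rpower (q / p) (- (q / (p + q)))). rewrite <- Rpower_plus.
    f_equal. field. lra. }
  replace (Rpower (p / q) (q / (p + q)) * Rpower X (q / (p + q)) * (Rpower (q / p) (p / (p + q)) * Rpower Y (p / (p + q))))
    with (Rpower (p / q) (q / (p + q)) * Rpower (q / p) (p / (p + q)) * (Rpower X (q / (p + q)) * Rpower Y (p / (p + q)))) in H by ring.
  rewrite E in H.
  replace (q / (p + q) * (p / q * X) + p / (p + q) * (q / p * Y)) with ((p * X + q * Y) / (p + q)) in H by (field; lra).
  apply Rmult_le_reg_r with (/ (p + q)); [apply Rinv_0_lt_compat; lra|].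
  replace ((p + q) * Rpower (q / p) ((p - q) / (p + q)) * (Rpower X (q / (p + q)) * Rpower Y (p / (p + q))) * / (p + q))
    with (Rpower (q / p) ((p - q) / (p + q)) * (Rpower X (q / (p + q)) * Rpower Y (p / (p + q)))) by (field; lra).
  exact H.
Qed.

Lemma X_le_Z X Y p q : 0 < X -> X <= Y -> 0 < p -> 0 < q ->
  X <= Rpower X (q / (p + q)) * Rpower Y (p / (p + q)).
Proof.
  intros HX HXY Hp Hq.
  assert (Hbe : 0 <= p / (p + q)) by (apply Rlt_le, Rdiv_lt_0_compat; lra).
  assert (E : X = Rpower X (q / (p + q)) * Rpower X (p / (p + q))).
  { rewrite <- Rpower_plus. replace (q / (p + q) + p / (p + q)) with 1 by (field; lra). rewrite Rpower_1; auto. }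
  rewrite E at 1. apply Rmult_le_compat_l; [unfold Rpower; apply Rlt_le, exp_pos|].
  apply Rle_Rpower_l; auto; lra.
Qed.

Lemma exRInt_of (f h : R -> R) a b : a <= b ->
  (forall x, a < x < b -> f x = h x) -> (forall x, a <= x <= b -> continuous h x) -> ex_RInt f a b.
Proof.
  intros Hab He Hc. apply ex_RInt_ext with h.
  - rewrite Rmin_left, Rmax_right by lra. intros; symmetry; apply He; lra.
  - apply (ex_RInt_continuous (V := R_CompleteNormedModule)). rewrite Rmin_left, Rmax_right by lra. auto.
Qed.

Lemma RInt_upper (f B : R -> R) a b : a <= b -> ex_RInt f a b -> ex_RInt B a b ->
  (forall x, a < x < b -> f x <= B x) -> RInt f a b <= RInt B a b.
Proof. intros; apply RInt_le; auto. Qed.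

Lemma RInt_abs_bound (f B : R -> R) a b : a <= b -> ex_RInt f a b -> ex_RInt B a b ->
  (forall x, a < x < b -> Rabs (f x) <= B x) -> Rabs (RInt f a b) <= RInt B a b.
Proof.
  intros Hab Hf HB H. apply Rabs_le. split.
  - assert (E : RInt (fun x => - B x) a b = - RInt B a b).
    { exact (RInt_opp (V := R_CompleteNormedModule) B a b HB). }
    rewrite <- E. apply RInt_le; auto.
    + exact (ex_RInt_opp (V := R_CompleteNormedModule) B a b HB).
    + intros x Hx. specialize (H x Hx). apply Rabs_le_between in H. lra.
  - apply RInt_le; auto. intros x Hx. specialize (H x Hx). apply Rabs_le_between in H. lra.
Qed.

Lemma RInt_const' (c a b : R) : RInt (fun _ => c) a b = (b - a) * c.
Proof. rewrite RInt_const. reflexivity. Qed.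

Lemma is_RInt_exp mu Rr a : 0 < mu -> a <= Rr ->
  is_RInt (fun s => exp (- mu * (Rr - s))) a Rr ((1 - exp (- mu * (Rr - a))) / mu).
Proof.
  intros Hmu Ha.
  replace ((1 - exp (- mu * (Rr - a))) / mu) with
      (minus ((fun s => exp (- mu * (Rr - s)) / mu) Rr) ((fun s => exp (- mu * (Rr - s)) / mu) a)).
  2:{ unfold minus, plus, opp; simpl. replace (- mu * (Rr - Rr)) with 0 by ring. rewrite exp_0. field. lra. }
  apply (is_RInt_derive (fun s => exp (- mu * (Rr - s)) / mu)).
  - intros x _. auto_derive; auto. replace (Rr + - x) with (Rr - x) by ring. field. lra.
  - intros x _. apply cexp. apply cmul; [apply cconst|]. apply cminus; [apply cconst|apply cid].
Qed.

Lemma RInt_exp_le mu Rr a : 0 < mu -> a <= Rr ->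
  ex_RInt (fun s => exp (- mu * (Rr - s))) a Rr /\
  RInt (fun s => exp (- mu * (Rr - s))) a Rr <= 1 / mu.
Proof.
  intros Hmu Ha. assert (H := is_RInt_exp mu Rr a Hmu Ha). split.
  - eexists; exact H.
  - rewrite (is_RInt_unique _ _ _ _ H). unfold Rdiv. apply Rmult_le_compat_r.
    + apply Rlt_le, Rinv_0_lt_compat; lra.
    + assert (0 < exp (- mu * (Rr - a))) by apply exp_pos. lra.
Qed.

Lemma poly_exp y a c : 0 < y -> 0 < a -> 0 < c -> Rpower y a <= Rpower (a / c) a * exp (c * y).
Proof.
  intros Hy Ha Hc.
  assert (H1 : y <= a / c * exp (c * y / a)).
  { assert (H := exp_ineq1_le (c * y / a)).
    apply Rmult_le_reg_l with (c / a); [apply Rdiv_lt_0_compat; lra|].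
    replace (c / a * (a / c * exp (c * y / a))) with (exp (c * y / a)) by (field; lra).
    replace (c / a * y) with (c * y / a) by (field; lra). lra. }
  apply Rle_trans with (Rpower (a / c * exp (c * y / a)) a).
  - apply Rle_Rpower_l; lra.
  - rewrite <- Rpower_mult_distr by (try apply exp_pos; apply Rdiv_lt_0_compat; lra).
    apply Req_le. f_equal. unfold Rpower at 1. rewrite ln_exp. f_equal. field. lra.
Qed.

Lemma exp_small c eps : 0 < c -> 0 < eps -> exp (- (c / eps)) <= eps / c.
Proof.
  intros Hc He. rewrite exp_Ropp.
  assert (H := exp_ineq1_le (c / eps)).
  assert (0 < c / eps) by (apply Rdiv_lt_0_compat; lra).
  replace (eps / c) with (/ (c / eps)) by (field; lra).
  apply Rinv_le_contravar; lra.
Qed.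

Lemma qlim_right (U : R -> R) a L :
  filterlim (fun y => (U y - U a) / (y - a)) (at_right a) (locally L) ->
  forall e, 0 < e -> exists d, 0 < d /\ forall y, a < y < a + d -> Rabs (U y - U a) < e.
Proof.
  intros H e He.
  destruct (H (fun z => Rabs (z - L) < 1)) as [d1 Hd1].
  { exists (mkposreal 1 Rlt_0_1). intros z Hz. exact Hz. }
  assert (HL : 0 < Rabs L + 1) by (assert (0 <= Rabs L) by apply Rabs_pos; lra).
  exists (Rmin d1 (e / (Rabs L + 1))). split.
  - apply Rmin_glb_lt; [apply cond_pos|apply Rdiv_lt_0_compat; lra].
  - intros y Hy. assert (Hm1 := Rmin_l d1 (e / (Rabs L + 1))). assert (Hm2 := Rmin_r d1 (e / (Rabs L + 1))).
    assert (Hq : Rabs ((U y - U a) / (y - a) - L) < 1).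
    { apply Hd1; [|lra]. change (Rabs (y - a) < d1). rewrite Rabs_right; lra. }
    assert (Hq' : Rabs ((U y - U a) / (y - a)) < Rabs L + 1).
    { assert (Rabs ((U y - U a) / (y - a)) <= Rabs ((U y - U a) / (y - a) - L) + Rabs L).
      { replace ((U y - U a) / (y - a)) with (((U y - U a) / (y - a) - L) + L) at 1 by ring. apply Rabs_triang. }
      lra. }
    replace (U y - U a) with ((U y - U a) / (y - a) * (y - a)) by (field; lra).
    rewrite Rabs_mult, (Rabs_right (y - a)) by lra.
    apply Rle_lt_trans with ((Rabs L + 1) * (y - a)).
    + apply Rmult_le_compat_r; lra.
    + apply Rmult_lt_reg_l with (/ (Rabs L + 1)); [apply Rinv_0_lt_compat; lra|].
      rewrite <- Rmult_assoc, Rinv_l by lra. unfold Rdiv in Hm2. lra.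
Qed.

Lemma qlim_left (U : R -> R) a L :
  filterlim (fun y => (U y - U a) / (y - a)) (at_left a) (locally L) ->
  forall e, 0 < e -> exists d, 0 < d /\ forall y, a - d < y < a -> Rabs (U y - U a) < e.
Proof.
  intros H e He.
  destruct (H (fun z => Rabs (z - L) < 1)) as [d1 Hd1].
  { exists (mkposreal 1 Rlt_0_1). intros z Hz. exact Hz. }
  assert (HL : 0 < Rabs L + 1) by (assert (0 <= Rabs L) by apply Rabs_pos; lra).
  exists (Rmin d1 (e / (Rabs L + 1))). split.
  - apply Rmin_glb_lt; [apply cond_pos|apply Rdiv_lt_0_compat; lra].
  - intros y Hy. assert (Hm1 := Rmin_l d1 (e / (Rabs L + 1))). assert (Hm2 := Rmin_r d1 (e / (Rabs L + 1))).
    assert (Hq : Rabs ((U y - U a) / (y - a) - L) < 1).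
    { apply Hd1; [|lra]. change (Rabs (y - a) < d1). rewrite Rabs_left; lra. }
    assert (Hq' : Rabs ((U y - U a) / (y - a)) < Rabs L + 1).
    { assert (Rabs ((U y - U a) / (y - a)) <= Rabs ((U y - U a) / (y - a) - L) + Rabs L).
      { replace ((U y - U a) / (y - a)) with (((U y - U a) / (y - a) - L) + L) at 1 by ring. apply Rabs_triang. }
      lra. }
    replace (U y - U a) with ((U y - U a) / (y - a) * (y - a)) by (field; lra).
    rewrite Rabs_mult, (Rabs_left (y - a)) by lra.
    apply Rle_lt_trans with ((Rabs L + 1) * - (y - a)).
    + apply Rmult_le_compat_r; lra.
    + apply Rmult_lt_reg_l with (/ (Rabs L + 1)); [apply Rinv_0_lt_compat; lra|].
      rewrite <- Rmult_assoc, Rinv_l by lra. unfold Rdiv in Hm2. lra.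
Qed.

Lemma U_within (U dU : R -> R) Rr : 0 < Rr ->
  C1_closed_with U dU 0 Rr ->
  forall y, 0 <= y <= Rr -> filterlim U (within (fun z => 0 <= z <= Rr) (locally y)) (locally (U y)).
Proof.
  intros HR [Hd [Hr [Hl _]]] y Hy.
  destruct (Req_dec y 0) as [E0|N0]; [|destruct (Req_dec y Rr) as [ER|NR]].
  - subst y. intros P [e He].
    destruct (qlim_right U 0 (dU 0) Hr e (cond_pos e)) as [d [Hd0 Hdd]].
    exists (mkposreal d Hd0). intros z Hz Dz. apply He. change (Rabs (U z - U 0) < e).
    destruct (Req_dec z 0) as [->|Nz].
    + rewrite Rminus_diag, Rabs_R0. apply cond_pos.
    + apply Hdd. change (Rabs (z - 0) < d) in Hz. rewrite Rminus_0_r, Rabs_right in Hz; lra.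
  - subst y. intros P [e He].
    destruct (qlim_left U Rr (dU Rr) Hl e (cond_pos e)) as [d [Hd0 Hdd]].
    exists (mkposreal d Hd0). intros z Hz Dz. apply He. change (Rabs (U z - U Rr) < e).
    destruct (Req_dec z Rr) as [->|Nz].
    + rewrite Rminus_diag, Rabs_R0. apply cond_pos.
    + apply Hdd. change (Rabs (z - Rr) < d) in Hz. rewrite Rabs_left in Hz; lra.
  - apply cont_within. apply (cont_of_der _ _ (dU y)). apply Hd. lra.
Qed.

Lemma RInt_pow n Rr c : 0 <= Rr ->
  ex_RInt (fun s => s ^ S n * c) 0 Rr /\ RInt (fun s => s ^ S n * c) 0 Rr = c * Rr ^ S (S n) / INR (S (S n)).
Proof.
  intros HR.
  assert (HN : 0 < INR (S (S n))) by (apply lt_0_INR; lia).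
  assert (H : is_RInt (fun s => s ^ S n * c) 0 Rr (c * Rr ^ S (S n) / INR (S (S n)))).
  { replace (c * Rr ^ S (S n) / INR (S (S n))) with
      (minus ((fun s => c * s ^ S (S n) / INR (S (S n))) Rr) ((fun s => c * s ^ S (S n) / INR (S (S n))) 0)).
    2:{ set (NN := INR (S (S n))) in *. unfold minus, plus, opp; simpl. field. lra. }
    apply (is_RInt_derive (fun s => c * s ^ S (S n) / INR (S (S n)))).
    - intros x _. auto_derive; auto. simpl pred.
      change (match n with 0%nat => 1 | S _ => INR n + 1 end) with (INR (S n)).
      assert (0 <= INR (S n)) by apply pos_INR. change (x ^ S n) with (x * x ^ n). field. lra.
    - intros x _. apply cmul; [apply cpow, cid|apply cconst]. }
  split; [eexists; exact H|apply is_RInt_unique; exact H].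
Qed.

Lemma exp_le x y : x <= y -> exp x <= exp y.
Proof. intros [H|H]; [apply Rlt_le, exp_increasing; auto|subst; lra]. Qed.

Lemma build n Rr g A B p q eps U :
  0 < Rr -> 0 < A -> A < B -> 0 < p -> 0 < q -> 0 < eps ->
  (forall x, 0 <= x <= Rr -> 0 < g x) ->
  (forall x, 0 <= x <= Rr -> is_derive g x (Derive g x)) ->
  solves_Nstar (S (S n)) Rr g A B p q eps U ->
  exists dU l1 l2,
    Hyp n Rr eps l1 l2 p q g (Derive g) U dU (Derive_n U 2) /\
    (forall x, 0 < x < Rr -> Derive U x = dU x) /\
    vfun n eps g dU Rr = Rr ^ S (S n) * (B - A) / INR (S (S n)) /\
    A <= Rpower l1 (q / (p + q)) * Rpower l2 (p / (p + q)).
Proof.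
  intros HR HA HAB Hp Hq He Hgpos Hgd [[dU [HC1 [HdU0 HdUR]]] [Hsm [Hode Hint]]].
  pose proof HC1 as [Hd [Hr [Hl Hwc]]].
  assert (HN : 0 < INR (S (S n))) by (apply lt_0_INR; lia).
  assert (HUc : forall x, continuity_pt (fun s => U (clamp Rr s)) x).
  { apply within_clamp_cont; [lra|]. apply (U_within U dU Rr HR HC1). }
  destruct (continuity_ab_min (fun s => U (clamp Rr s)) 0 Rr) as [xm [Hm _]]; [lra|intros; apply HUc|].
  destruct (continuity_ab_maj (fun s => U (clamp Rr s)) 0 Rr) as [xM [HM _]]; [lra|intros; apply HUc|].
  set (m := U (clamp Rr xm)) in *. set (M := U (clamp Rr xM)) in *.
  change (S (S n) - 1)%nat with (S n) in *.
  set (I1 := RInt (fun s => s ^ S n * exp (p * U s)) 0 Rr) in *.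
  set (I2 := RInt (fun s => s ^ S n * exp (- q * U s)) 0 Rr) in *.
  assert (Hex1 : ex_RInt (fun s => s ^ S n * exp (p * U s)) 0 Rr).
  { apply (exRInt_of _ (fun s => s ^ S n * exp (p * U (clamp Rr s)))); [lra| |].
    - intros; rewrite clamp_id; lra.
    - intros; apply cmul; [apply cpow, cid|apply cexp, cmul; [apply cconst|apply cpt, HUc]]. }
  assert (Hex2 : ex_RInt (fun s => s ^ S n * exp (- q * U s)) 0 Rr).
  { apply (exRInt_of _ (fun s => s ^ S n * exp (- q * U (clamp Rr s)))); [lra| |].
    - intros; rewrite clamp_id; lra.
    - intros; apply cmul; [apply cpow, cid|apply cexp, cmul; [apply cconst|apply cpt, HUc]]. }
  assert (HRN : 0 < Rr ^ S (S n)) by (apply pow_lt; lra).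
  assert (HI1 : 0 < I1).
  { destruct (RInt_pow n Rr (exp (p * m)) ltac:(lra)) as [Hxx Hv].
    apply Rlt_le_trans with (exp (p * m) * Rr ^ S (S n) / INR (S (S n))).
    - apply Rdiv_lt_0_compat; auto. apply Rmult_lt_0_compat; auto; apply exp_pos.
    - rewrite <- Hv. apply RInt_le; auto; try lra.
      intros x Hx. apply Rmult_le_compat_l; [apply pow_le; lra|]. apply exp_le.
      specialize (Hm x ltac:(lra)). rewrite clamp_id in Hm by lra. fold m in Hm. nra. }
  assert (HI2 : 0 < I2).
  { destruct (RInt_pow n Rr (exp (- q * M)) ltac:(lra)) as [Hxx Hv].
    apply Rlt_le_trans with (exp (- q * M) * Rr ^ S (S n) / INR (S (S n))).
    - apply Rdiv_lt_0_compat; auto. apply Rmult_lt_0_compat; auto; apply exp_pos.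
    - rewrite <- Hv. apply RInt_le; auto; try lra.
      intros x Hx. apply Rmult_le_compat_l; [apply pow_le; lra|]. apply exp_le.
      specialize (HM x ltac:(lra)). rewrite clamp_id in HM by lra. fold M in HM. nra. }
  set (l1 := Rr ^ S (S n) / INR (S (S n)) * A / I1).
  set (l2 := Rr ^ S (S n) / INR (S (S n)) * B / I2).
  assert (Hl1 : 0 < l1) by (unfold l1; repeat apply Rdiv_lt_0_compat; try apply Rmult_lt_0_compat; try apply Rdiv_lt_0_compat; lra).
  assert (Hl2 : 0 < l2) by (unfold l2; repeat apply Rdiv_lt_0_compat; try apply Rmult_lt_0_compat; try apply Rdiv_lt_0_compat; lra).
  assert (HDU : forall x, 0 < x < Rr -> Derive U x = dU x).
  { intros x Hx. apply is_derive_unique, Hd; auto. }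
  assert (HvR : vfun n eps g dU Rr = Rr ^ S (S n) * (B - A) / INR (S (S n))).
  { unfold vfun. rewrite HdUR. assert (0 < g Rr) by (apply Hgpos; lra).
    change (Rr ^ S (S n)) with (Rr * Rr ^ S n). set (NN := INR (S (S n))) in *. field. repeat split; lra. }
  assert (H : Hyp n Rr eps l1 l2 p q g (Derive g) U dU (Derive_n U 2)).
  { constructor; auto.
    - intros x Hx. apply (cont_of_der _ _ _ (Hgd x Hx)).
    - intros x Hx. apply Hgd; lra.
    - intros x Hx. apply is_derive_ext_loc with (f := Derive_n U 1).
      + assert (Hdd : 0 < Rmin x (Rr - x)) by (apply Rmin_glb_lt; lra).
        exists (mkposreal _ Hdd). intros y Hy. change (Rabs (y - x) < Rmin x (Rr - x)) in Hy.
        assert (Hy1 := Rmin_l x (Rr - x)). assert (Hy2 := Rmin_r x (Rr - x)).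
        apply Rabs_def2 in Hy. simpl. apply HDU. lra.
      + apply (Derive_correct (Derive_n U 1)). apply Hsm; auto.
    - apply within_clamp_cont; [lra|]. exact Hwc.
    - intros x Hx. rewrite <- (HDU x Hx). rewrite Hode by auto.
      unfold Xf, Yf, l1, l2. unfold Rdiv. ring.
    - rewrite HvR. apply Rdiv_lt_0_compat; auto. apply Rmult_lt_0_compat; lra. }
  exists dU, l1, l2. split; [exact H|]. split; [exact HDU|]. split; [exact HvR|].
  set (Z := Rpower l1 (q / (p + q)) * Rpower l2 (p / (p + q))).
  assert (HXZ : forall x, 0 < x < Rr -> Xf l1 p U x <= Z).
  { intros x Hx. unfold Z. rewrite <- (XY_const l1 l2 p q U x) by auto.
    apply X_le_Z; auto.
    - unfold Xf. apply Rmult_lt_0_compat; auto; apply exp_pos.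
    - assert (Hph := phi_nonneg _ _ _ _ _ _ _ _ _ _ _ _ H x Hx). unfold phif in Hph. lra. }
  assert (E1 : RInt (fun s => s ^ S n * Xf l1 p U s) 0 Rr = l1 * I1).
  { transitivity (RInt (fun s => scal l1 (s ^ S n * exp (p * U s))) 0 Rr).
    - apply RInt_ext. intros; unfold Xf, scal; simpl; unfold mult; simpl; ring.
    - rewrite (RInt_scal (V := R_CompleteNormedModule)); auto. }
  assert (E2 : l1 * I1 = Rr ^ S (S n) / INR (S (S n)) * A) by (unfold l1; field; lra).
  destruct (RInt_pow n Rr Z ltac:(lra)) as [HxZ HvZ].
  assert (Hle : RInt (fun s => s ^ S n * Xf l1 p U s) 0 Rr <= RInt (fun s => s ^ S n * Z) 0 Rr).
  { apply RInt_le; auto; try lra.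
    - apply ex_RInt_ext with (fun s => scal l1 (s ^ S n * exp (p * U s))).
      + intros; unfold Xf, scal; simpl; unfold mult; simpl; ring.
      + apply (ex_RInt_scal (V := R_CompleteNormedModule)); auto.
    - intros x Hx. apply Rmult_le_compat_l; [apply pow_le; lra|]. apply HXZ; auto. }
  rewrite E1, E2, HvZ in Hle.
  apply Rmult_le_reg_l with (Rr ^ S (S n) / INR (S (S n))); [apply Rdiv_lt_0_compat; auto|].
  replace (Rr ^ S (S n) / INR (S (S n)) * Z) with (Z * Rr ^ S (S n) / INR (S (S n))) by (field; lra).
  exact Hle.
Qed.

Lemma RInt_ec_bound mu Rr a K1 K0 : 0 < mu -> a <= Rr -> 0 <= K1 ->
  ex_RInt (fun s => K1 * exp (- mu * (Rr - s)) + K0) a Rr /\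
  RInt (fun s => K1 * exp (- mu * (Rr - s)) + K0) a Rr <= K1 / mu + (Rr - a) * K0.
Proof.
  intros Hmu Ha HK.
  destruct (RInt_exp_le mu Rr a Hmu Ha) as [Hex Hle].
  assert (Hex1 : ex_RInt (fun s => K1 * exp (- mu * (Rr - s))) a Rr).
  { apply (ex_RInt_scal (V := R_CompleteNormedModule) _ _ _ K1 Hex). }
  assert (Hex0 : ex_RInt (fun _ => K0) a Rr) by apply (ex_RInt_const (V := R_CompleteNormedModule)).
  assert (Hexs := ex_RInt_plus (V := R_CompleteNormedModule) _ _ _ _ Hex1 Hex0).
  split; [exact Hexs|].
  assert (EP := RInt_plus (V := R_CompleteNormedModule) _ _ _ _ Hex1 Hex0).
  change (RInt (fun s => K1 * exp (- mu * (Rr - s)) + K0) a Rr = RInt (fun s => K1 * exp (- mu * (Rr - s))) a Rr + RInt (fun _ => K0) a Rr) in EP.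
  rewrite EP.
  rewrite RInt_const'.
  assert (E : RInt (fun s => K1 * exp (- mu * (Rr - s))) a Rr = K1 * RInt (fun s => exp (- mu * (Rr - s))) a Rr).
  { apply (RInt_scal (V := R_CompleteNormedModule)); auto. }
  rewrite E. assert (K1 * RInt (fun s => exp (- mu * (Rr - s))) a Rr <= K1 * (1 / mu)) by (apply Rmult_le_compat_l; auto).
  unfold Rdiv in *. lra.
Qed.

Lemma pw n Rr eps l1 l2 p q g U dU Mt :
  Hyp n Rr eps l1 l2 p q g (Derive g) U dU (Derive_n U 2) ->
  (forall x, 0 < x < Rr -> Derive U x = dU x) -> 0 < Mt ->
  (forall x, 0 < x < Rr -> Mt ^ 2 * g x <= p * Xf l1 p U x + q * Yf l2 q U x) ->
  forall s, 0 < s < Rr ->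
  let V0 := vfun n eps g dU Rr in
  let r := vfun n eps g dU s / s ^ S n in
  let K := V0 / (Rr / 4) ^ S (S n) in
  let Cv := Rr * K + V0 / (Rr / 4) ^ S n in
  let mu := Mt / eps in
  Derive U s = - r / (eps ^ 2 * g s) /\ 0 <= r /\ r <= Cv /\
  (Rr / 4 <= s -> r <= Cv * exp (- mu * (Rr - s))) /\
  (s <= Rr / 4 -> r <= s * K * exp (- mu * (Rr / 2))) /\
  r * s ^ S n <= V0 * exp (- mu * (Rr - s)).
Proof.
  intros H HDU HMt Hk s Hs V0 r K Cv mu.
  assert (HR := hR _ _ _ _ _ _ _ _ _ _ _ _ H).
  assert (Heps := heps _ _ _ _ _ _ _ _ _ _ _ _ H).
  assert (HV0 := hvR _ _ _ _ _ _ _ _ _ _ _ _ H). fold V0 in HV0.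
  assert (Hgs : 0 < g s) by (apply (hgpos _ _ _ _ _ _ _ _ _ _ _ _ H); lra).
  assert (Hsn : 0 < s ^ S n) by (apply pow_lt; lra).
  destruct (ratio_bounds _ _ _ _ _ _ _ _ _ _ _ _ _ H HMt Hk s Hs) as [B1 [B2 B3]].
  fold V0 r mu in B1, B2, B3.
  assert (HK : 0 < K) by (unfold K; apply Rdiv_lt_0_compat; auto; apply pow_lt; lra).
  assert (HK2 : 0 < V0 / (Rr / 4) ^ S n) by (apply Rdiv_lt_0_compat; auto; apply pow_lt; lra).
  assert (Hexp1 : exp (- mu * (Rr - s)) <= 1).
  { rewrite <- exp_0. apply exp_le. assert (0 < mu) by (apply Rdiv_lt_0_compat; lra). nra. }
  assert (Hexp2 : exp (- mu * (Rr / 2)) <= 1).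
  { rewrite <- exp_0. apply exp_le. assert (0 < mu) by (apply Rdiv_lt_0_compat; lra). nra. }
  assert (Hexp1p := exp_pos (- mu * (Rr - s))). assert (Hexp2p := exp_pos (- mu * (Rr / 2))).
  replace (s * (V0 / (Rr / 4) ^ S (S n) * exp (- mu * (Rr / 2)))) with (s * K * exp (- mu * (Rr / 2))) in B3 by (unfold K; ring).
  split; [|split; [|split; [|split; [|split]]]].
  - rewrite HDU by auto. rewrite (dU_v _ _ _ _ _ _ _ _ _ _ _ _ H s Hs). unfold r. field. repeat split; lra.
  - exact B1.
  - destruct (Rle_lt_dec (Rr / 4) s) as [Hs4|Hs4].
    + specialize (B2 Hs4). unfold Cv. assert (0 <= Rr * K) by (apply Rmult_le_pos; lra).
      assert (V0 / (Rr / 4) ^ S n * exp (- mu * (Rr - s)) <= V0 / (Rr / 4) ^ S n)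
        by (rewrite <- (Rmult_1_r (V0 / _)) at 2; apply Rmult_le_compat_l; lra). lra.
    + specialize (B3 ltac:(lra)). unfold Cv.
      assert (s * K * exp (- mu * (Rr / 2)) <= Rr * K).
      { apply Rle_trans with (s * K); [rewrite <- (Rmult_1_r (s * K)) at 2; apply Rmult_le_compat_l; [apply Rmult_le_pos|]; lra|].
        apply Rmult_le_compat_r; lra. }
      lra.
  - intros Hs4. specialize (B2 Hs4). unfold Cv. assert (0 <= Rr * K) by (apply Rmult_le_pos; lra).
    assert (V0 / (Rr / 4) ^ S n * exp (- mu * (Rr - s)) <= Cv * exp (- mu * (Rr - s))) by (apply Rmult_le_compat_r; unfold Cv; lra).
    unfold Cv in *. lra.
  - exact B3.
  - assert (Hv := v_exp_bound _ _ _ _ _ _ _ _ _ _ _ _ _ H HMt Hk s ltac:(lra)).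
    rewrite vc_eq in Hv by lra. unfold r. unfold Rdiv. rewrite Rmult_assoc, Rinv_l, Rmult_1_r by lra.
    exact Hv.
Qed.

Lemma DU2_le r eps gs gm : 0 < eps -> 0 < gm -> gm <= gs ->
  (- r / (eps ^ 2 * gs)) ^ 2 <= r ^ 2 / (eps ^ 4 * gm ^ 2).
Proof.
  intros He Hg Hgs.
  replace ((- r / (eps ^ 2 * gs)) ^ 2) with (r ^ 2 / (eps ^ 4 * gs ^ 2)) by (field; lra).
  unfold Rdiv. apply Rmult_le_compat_l; [apply pow2_ge_0|].
  apply Rinv_le_contravar; [apply Rmult_lt_0_compat; apply pow_lt; lra|].
  apply Rmult_le_compat_l; [apply pow_le; lra|]. apply pow_incr; lra.
Qed.

Lemma div_le a b c : 0 < c -> a <= b -> a / c <= b / c.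
Proof. intros; unfold Rdiv; apply Rmult_le_compat_r; [apply Rlt_le, Rinv_0_lt_compat|]; auto. Qed.

Lemma goal2 (DU r g : R -> R) Rr e eps Mt Cv gm :
  0 < eps -> 0 < Mt -> 0 < gm -> 0 <= e <= Rr -> 0 <= Cv ->
  ex_RInt (fun s => DU s ^ 2) (Rr - e) Rr ->
  (forall s, Rr - e < s < Rr ->
     DU s = - r s / (eps ^ 2 * g s) /\ 0 <= r s /\ r s <= Cv /\
     r s <= Cv * exp (- (Mt / eps) * (Rr - s)) /\ gm <= g s) ->
  RInt (fun s => DU s ^ 2) (Rr - e) Rr <= Cv ^ 2 / gm ^ 2 / (Mt * eps ^ 3).
Proof.
  intros He HMt Hgm Hee HCv Hex Hpt.
  assert (Hmu : 0 < Mt / eps) by (apply Rdiv_lt_0_compat; lra).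
  set (K1 := Cv ^ 2 / (eps ^ 4 * gm ^ 2)).
  assert (HK1 : 0 <= K1) by (unfold K1; apply Rmult_le_pos; [apply pow2_ge_0|apply Rlt_le, Rinv_0_lt_compat, Rmult_lt_0_compat; apply pow_lt; lra]).
  destruct (RInt_ec_bound (Mt / eps) Rr (Rr - e) K1 0 Hmu ltac:(lra) HK1) as [HexB HB].
  eapply Rle_trans; [apply RInt_upper; [lra|exact Hex|exact HexB|]|].
  - intros s Hs. destruct (Hpt s Hs) as [E [Hr0 [HrC [Hre Hg]]]].
    rewrite E. eapply Rle_trans; [apply (DU2_le _ _ _ gm); lra|].
    assert (Hexp := exp_pos (- (Mt / eps) * (Rr - s))).
    assert (r s ^ 2 <= Cv ^ 2 * exp (- (Mt / eps) * (Rr - s))).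
    { simpl. rewrite !Rmult_1_r. apply Rle_trans with (Cv * (Cv * exp (- (Mt / eps) * (Rr - s)))).
      - apply Rmult_le_compat; lra.
      - lra. }
    unfold K1. rewrite Rplus_0_r.
    replace (Cv ^ 2 / (eps ^ 4 * gm ^ 2) * exp (- (Mt / eps) * (Rr - s))) with
      (Cv ^ 2 * exp (- (Mt / eps) * (Rr - s)) / (eps ^ 4 * gm ^ 2)) by (field; split; lra).
    apply div_le; [apply Rmult_lt_0_compat; apply pow_lt; lra|lra].
  - eapply Rle_trans; [exact HB|]. rewrite Rmult_0_r, Rplus_0_r.
    unfold K1. apply Req_le. field. repeat split; lra.
Qed.

Lemma exp4 L : exp L ^ 4 = exp (4 * L).
Proof. replace (4 * L) with (L + (L + (L + L))) by ring. rewrite !exp_plus. simpl; ring. Qed.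

Lemma goal1 (DU r g : R -> R) Rr e eps Mt Cv gm kappa :
  0 < eps < 1 -> 0 < Mt -> 0 < gm -> 0 < kappa < 1 -> e = Rpower eps kappa -> 0 < e -> 2 * e <= Rr -> 0 <= Cv ->
  ex_RInt (fun s => / s * DU s ^ 2) e (Rr - e) ->
  (forall s, e < s < Rr - e ->
     DU s = - r s / (eps ^ 2 * g s) /\ 0 <= r s /\ r s <= Cv * exp (- (Mt / eps) * e) /\ gm <= g s) ->
  RInt (fun s => / s * DU s ^ 2) e (Rr - e) <=
    (Rr * Cv ^ 2 / gm ^ 2 * Rpower (((kappa + 4) / (1 - kappa)) / (3 / 2 * Mt)) ((kappa + 4) / (1 - kappa)))
    * exp (- (Mt / (2 * Rpower eps (1 - kappa)))).
Proof.
  intros He HMt Hgm Hk Ee He0 H2e HCv Hex Hpt.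
  set (E := exp (- (Mt / eps) * e)).
  assert (HE : 0 < E) by apply exp_pos.
  set (B := Cv ^ 2 * E ^ 2 / (e * eps ^ 4 * gm ^ 2)).
  assert (Hden : 0 < e * eps ^ 4 * gm ^ 2) by (repeat apply Rmult_lt_0_compat; try apply pow_lt; lra).
  assert (HexB : ex_RInt (fun _ => B) e (Rr - e)) by apply (ex_RInt_const (V := R_CompleteNormedModule)).
  eapply Rle_trans; [apply RInt_upper; [lra|exact Hex|exact HexB|]|].
  - intros s Hs. destruct (Hpt s Hs) as [ED [Hr0 [HrC Hg]]].
    rewrite ED.
    assert (H1 : (- r s / (eps ^ 2 * g s)) ^ 2 <= Cv ^ 2 * E ^ 2 / (eps ^ 4 * gm ^ 2)).
    { eapply Rle_trans; [apply (DU2_le _ _ _ gm); lra|].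
      apply div_le; [apply Rmult_lt_0_compat; apply pow_lt; lra|].
      rewrite <- Rpow_mult_distr. apply pow_incr. unfold E; lra. }
    assert (H2 : / s <= / e) by (apply Rinv_le_contravar; lra).
    assert (H3 : 0 <= (- r s / (eps ^ 2 * g s)) ^ 2) by apply pow2_ge_0.
    apply Rle_trans with (/ e * (Cv ^ 2 * E ^ 2 / (eps ^ 4 * gm ^ 2))).
    + apply Rmult_le_compat; auto. apply Rlt_le, Rinv_0_lt_compat; lra.
    + unfold B. apply Req_le. field. repeat split; lra.
  - rewrite RInt_const'.
    assert (HB0 : 0 <= B) by (unfold B; apply Rmult_le_pos; [apply Rmult_le_pos; apply pow2_ge_0|apply Rlt_le, Rinv_0_lt_compat; lra]).
    apply Rle_trans with (Rr * B); [apply Rmult_le_compat_r; lra|].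
    set (L := ln eps).
    assert (Eeps : eps = exp L) by (unfold L; rewrite exp_ln; lra).
    assert (Ee' : e = exp (kappa * L)) by (rewrite Ee; reflexivity).
    set (y := exp (- (1 - kappa) * L)).
    assert (Hy : 0 < y) by apply exp_pos.
    assert (ET : Mt / eps * e = Mt * y).
    { rewrite Ee', Eeps at 1. unfold y. unfold Rdiv. rewrite <- exp_Ropp, Rmult_assoc, <- exp_plus.
      f_equal. f_equal. ring. }
    assert (EP : Rpower eps (1 - kappa) = / y).
    { unfold Rpower, y. fold L. rewrite <- exp_Ropp. f_equal. ring. }
    set (a := (kappa + 4) / (1 - kappa)). set (c := 3 / 2 * Mt).
    assert (Ha : 0 < a) by (unfold a; apply Rdiv_lt_0_compat; lra).
    assert (Hc : 0 < c) by (unfold c; lra).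
    assert (E4 : / (e * eps ^ 4) = Rpower y a).
    { rewrite Ee', Eeps, exp4, <- exp_plus, <- exp_Ropp. unfold Rpower, y. rewrite ln_exp. f_equal.
      unfold a. field. lra. }
    assert (HPE := poly_exp y a c Hy Ha Hc).
    assert (EE : E ^ 2 = exp (- (2 * (Mt * y)))).
    { unfold E. replace (- (Mt / eps) * e) with (- (Mt / eps * e)) by ring. rewrite ET.
      simpl. rewrite Rmult_1_r, <- exp_plus. f_equal. ring. }
    assert (EB : B = Cv ^ 2 / gm ^ 2 * exp (- (2 * (Mt * y))) * / (e * eps ^ 4)).
    { unfold B. rewrite EE. field. repeat split; try lra. }
    rewrite EB, E4, EP.
    replace (Mt / (2 * / y)) with (Mt * y / 2) by (field; lra).
    assert (Hexp : exp (- (2 * (Mt * y))) * exp (c * y) = exp (- (Mt * y / 2))).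
    { rewrite <- exp_plus. f_equal. unfold c. field. }
    assert (HCg : 0 <= Cv ^ 2 / gm ^ 2) by (apply Rmult_le_pos; [apply pow2_ge_0|apply Rlt_le, Rinv_0_lt_compat, pow_lt; lra]).
    assert (Hx1 := exp_pos (- (2 * (Mt * y)))).
    apply Rle_trans with (Rr * (Cv ^ 2 / gm ^ 2 * exp (- (2 * (Mt * y))) * (Rpower (a / c) a * exp (c * y)))).
    + apply Rmult_le_compat_l; [lra|]. apply Rmult_le_compat_l; [apply Rmult_le_pos; lra|exact HPE].
    + rewrite <- Hexp.
      set (E1 := exp (- (2 * (Mt * y)))). set (E2 := exp (c * y)). set (P := Rpower (a / c) a).
      assert (Heq : Rr * (Cv ^ 2 / gm ^ 2 * E1 * (P * E2)) = Rr * Cv ^ 2 / gm ^ 2 * P * (E1 * E2)) by (field; lra).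
      rewrite Heq. apply Rle_refl.
Qed.

Lemma coef_bound c gs gmax s ds Rr Dg : 0 <= c -> 0 < gs <= gmax -> 0 <= s <= Rr -> Rabs ds <= Dg ->
  Rabs (c * gs + s * ds) <= c * gmax + Rr * Dg.
Proof.
  intros Hc Hg Hs Hd. eapply Rle_trans; [apply Rabs_triang|].
  rewrite !Rabs_mult, (Rabs_pos_eq c), (Rabs_pos_eq gs), (Rabs_pos_eq s) by lra.
  apply Rplus_le_compat; [apply Rmult_le_compat_l; lra|]. apply Rmult_le_compat; try lra. apply Rabs_pos.
Qed.

Lemma goal3 (DU r g dg : R -> R) n Rr eps Mt Cv gm gmax Dg V0 :
  0 < eps -> 0 < Mt -> 0 < gm -> 0 < Rr -> 0 <= Cv -> 0 <= V0 -> 0 <= Dg ->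
  ex_RInt (fun s => ((INR (S (S n)) - 2) * g s + s * dg s) / Rr ^ S (S n) * s ^ (S (S n) - 1) * DU s ^ 2) 0 Rr ->
  (forall s, 0 < s < Rr ->
     DU s = - r s / (eps ^ 2 * g s) /\ 0 <= r s /\ r s <= Cv /\
     r s * s ^ S n <= V0 * exp (- (Mt / eps) * (Rr - s)) /\ gm <= g s <= gmax /\ Rabs (dg s) <= Dg) ->
  Rabs (eps ^ 2 / 2 * RInt (fun s => ((INR (S (S n)) - 2) * g s + s * dg s) / Rr ^ S (S n) * s ^ (S (S n) - 1) * DU s ^ 2) 0 Rr)
   <= (INR n * gmax + Rr * Dg) * Cv * V0 / (2 * Rr ^ S (S n) * gm ^ 2 * Mt) / eps.
Proof.
  intros He HMt Hgm HR HCv HV0 HDg Hex Hpt.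
  assert (Hmu : 0 < Mt / eps) by (apply Rdiv_lt_0_compat; lra).
  assert (HRN : 0 < Rr ^ S (S n)) by (apply pow_lt; lra).
  assert (Hn : 0 <= INR n) by apply pos_INR.
  set (Cg := INR n * gmax + Rr * Dg).
  set (K1 := Cg / Rr ^ S (S n) * (Cv * V0) / (eps ^ 4 * gm ^ 2)).
  assert (Hden : 0 < eps ^ 4 * gm ^ 2) by (apply Rmult_lt_0_compat; apply pow_lt; lra).
  assert (Hgmax : 0 < gmax) by (destruct (Hpt (Rr / 2) ltac:(lra)) as [_ [_ [_ [_ [Hg _]]]]]; lra).
  assert (HCg : 0 <= Cg) by (unfold Cg; apply Rplus_le_le_0_compat; apply Rmult_le_pos; lra).
  assert (HK1 : 0 <= K1).
  { unfold K1, Rdiv. repeat apply Rmult_le_pos; try lra; apply Rlt_le, Rinv_0_lt_compat; lra. }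
  destruct (RInt_ec_bound (Mt / eps) Rr 0 K1 0 Hmu ltac:(lra) HK1) as [HexB HB].
  rewrite Rabs_mult, (Rabs_pos_eq (eps ^ 2 / 2)) by (apply Rmult_le_pos; [apply pow_le|]; lra).
  apply Rle_trans with (eps ^ 2 / 2 * (K1 / (Mt / eps))).
  - apply Rmult_le_compat_l; [apply Rmult_le_pos; [apply pow_le|]; lra|].
    eapply Rle_trans; [apply RInt_abs_bound; [lra|exact Hex|exact HexB|]|].
    + intros s Hs. destruct (Hpt s Hs) as [ED [Hr0 [HrC [Hrv [Hg Hdg]]]]].
      rewrite Rplus_0_r. rewrite ED.
      change (S (S n) - 1)%nat with (S n).
      assert (Hc : Rabs ((INR (S (S n)) - 2) * g s + s * dg s) <= Cg).
      { unfold Cg. replace (INR (S (S n)) - 2) with (INR n) by (rewrite !S_INR; ring).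
        apply coef_bound; lra. }
      assert (Hsn : 0 < s ^ S n) by (apply pow_lt; lra).
      assert (H1 := DU2_le (r s) eps (g s) gm He Hgm (proj1 Hg)).
      assert (H2 : s ^ S n * r s ^ 2 <= Cv * (V0 * exp (- (Mt / eps) * (Rr - s)))).
      { replace (s ^ S n * r s ^ 2) with (r s * (r s * s ^ S n)) by ring.
        apply Rmult_le_compat; try lra. apply Rmult_le_pos; lra. }
      rewrite !Rabs_mult. rewrite (Rabs_pos_eq (s ^ S n)) by lra.
      rewrite (Rabs_pos_eq ((- r s / (eps ^ 2 * g s)) ^ 2)) by apply pow2_ge_0.
      unfold Rdiv at 1. rewrite Rabs_mult, Rabs_Rinv, (Rabs_pos_eq (Rr ^ S (S n))) by lra.
      apply Rle_trans with (Cg * / Rr ^ S (S n) * (s ^ S n * (r s ^ 2 / (eps ^ 4 * gm ^ 2)))).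
      * rewrite !Rmult_assoc. apply Rmult_le_compat; try apply Rabs_pos.
        -- apply Rmult_le_pos; [apply Rlt_le, Rinv_0_lt_compat; lra|]. apply Rmult_le_pos; [lra|apply pow2_ge_0].
        -- exact Hc.
        -- apply Rmult_le_compat_l; [apply Rlt_le, Rinv_0_lt_compat; lra|]. apply Rmult_le_compat_l; lra.
      * unfold K1. replace (s ^ S n * (r s ^ 2 / (eps ^ 4 * gm ^ 2))) with (s ^ S n * r s ^ 2 / (eps ^ 4 * gm ^ 2)) by (field; lra).
        replace (Cg / Rr ^ S (S n) * (Cv * V0) / (eps ^ 4 * gm ^ 2) * exp (- (Mt / eps) * (Rr - s)))
          with (Cg * / Rr ^ S (S n) * (Cv * (V0 * exp (- (Mt / eps) * (Rr - s))) / (eps ^ 4 * gm ^ 2))) by (field; lra).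
        apply Rmult_le_compat_l; [apply Rmult_le_pos; [lra|apply Rlt_le, Rinv_0_lt_compat; lra]|].
        apply div_le; lra.
    + rewrite Rmult_0_r, Rplus_0_r in HB. exact HB.
  - apply Req_le. unfold K1, Cg. field. repeat split; lra.
Qed.

Lemma goal4 (DU r g dg : R -> R) n Rr eps Mt Cv gm gmax Dg K e :
  0 < eps -> 0 < Mt -> 0 < gm -> 0 < Rr -> 0 <= Cv -> 0 <= K -> 0 <= Dg -> 0 < e <= Rr / 4 ->
  DU e = - r e / (eps ^ 2 * g e) -> 0 <= r e -> r e <= e * K * exp (- (Mt / eps) * (Rr / 2)) -> gm <= g e ->
  ex_RInt (fun s => (2 * (INR (S (S n)) - 1) * g s + s * dg s) / s * DU s ^ 2) e Rr ->
  (forall s, e < s < Rr ->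
     DU s = - r s / (eps ^ 2 * g s) /\ 0 <= r s /\ r s <= Cv /\
     (Rr / 4 <= s -> r s <= Cv * exp (- (Mt / eps) * (Rr - s))) /\
     (s <= Rr / 4 -> r s <= s * K * exp (- (Mt / eps) * (Rr / 2))) /\
     gm <= g s <= gmax /\ Rabs (dg s) <= Dg) ->
  Rabs (- (eps ^ 2 / 2) * g e * DU e ^ 2 +
        eps ^ 2 / 2 * RInt (fun s => (2 * (INR (S (S n)) - 1) * g s + s * dg s) / s * DU s ^ 2) e Rr)
   <= (Rr * K ^ 2 / (Mt * gm) + (2 * INR (S n) * gmax + Rr * Dg) * (4 / Rr * Cv ^ 2 + 2 * Cv * K) / (2 * gm ^ 2 * Mt)) / eps.
Proof.
  intros He HMt Hgm HR HCv HK HDg He4 EDe Hre0 Hre Hge Hex Hpt.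
  assert (Hmu : 0 < Mt / eps) by (apply Rdiv_lt_0_compat; lra).
  set (E2 := exp (- (Mt / eps) * (Rr / 2))).
  assert (HE2 : 0 < E2) by apply exp_pos.
  assert (HE2s : E2 <= eps / (Mt * Rr / 2)).
  { unfold E2. replace (- (Mt / eps) * (Rr / 2)) with (- ((Mt * Rr / 2) / eps)) by (field; lra).
    apply exp_small; [|lra]. apply Rmult_lt_0_compat; [apply Rmult_lt_0_compat|]; lra. }
  assert (HE21 : E2 <= 1) by (unfold E2; rewrite <- exp_0; apply exp_le; nra).
  assert (Hden : 0 < eps ^ 4 * gm ^ 2) by (apply Rmult_lt_0_compat; apply pow_lt; lra).
  assert (Hgmax : 0 < gmax) by (destruct (Hpt ((e + Rr) / 2) ltac:(lra)) as [_ [_ [_ [_ [_ [Hg _]]]]]]; lra).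
  assert (Hn : 0 <= INR (S n)) by apply pos_INR.
  set (Cg := 2 * INR (S n) * gmax + Rr * Dg).
  assert (HCg : 0 <= Cg) by (unfold Cg; apply Rplus_le_le_0_compat; repeat apply Rmult_le_pos; lra).
  set (K1 := Cg * (4 / Rr * Cv ^ 2) / (eps ^ 4 * gm ^ 2)).
  set (K0 := Cg * (Cv * K * E2) / (eps ^ 4 * gm ^ 2)).
  assert (HK1 : 0 <= K1).
  { unfold K1, Rdiv. repeat apply Rmult_le_pos; try lra; try apply pow2_ge_0; apply Rlt_le, Rinv_0_lt_compat; lra. }
  assert (HK0 : 0 <= K0).
  { unfold K0, Rdiv. repeat apply Rmult_le_pos; try lra; apply Rlt_le, Rinv_0_lt_compat; lra. }
  destruct (RInt_ec_bound (Mt / eps) Rr e K1 K0 Hmu ltac:(lra) HK1) as [HexB HB].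
  assert (HI : Rabs (RInt (fun s => (2 * (INR (S (S n)) - 1) * g s + s * dg s) / s * DU s ^ 2) e Rr)
               <= K1 / (Mt / eps) + Rr * K0).
  { eapply Rle_trans; [apply RInt_abs_bound; [lra|exact Hex|exact HexB|]|].
    - intros s Hs. destruct (Hpt s Hs) as [ED [Hr0 [HrC [Hr1 [Hr2 [Hg Hdg]]]]]].
      rewrite ED.
      assert (Hc : Rabs (2 * (INR (S (S n)) - 1) * g s + s * dg s) <= Cg).
      { unfold Cg. replace (2 * (INR (S (S n)) - 1)) with (2 * INR (S n)) by (rewrite (S_INR (S n)); ring).
        apply coef_bound; try lra. }
      assert (H1 := DU2_le (r s) eps (g s) gm He Hgm (proj1 Hg)).
      assert (H2 : r s ^ 2 / s <= 4 / Rr * Cv ^ 2 * exp (- (Mt / eps) * (Rr - s)) + Cv * K * E2).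
      { assert (Hexp := exp_pos (- (Mt / eps) * (Rr - s))).
        assert (0 <= 4 / Rr * Cv ^ 2 * exp (- (Mt / eps) * (Rr - s))).
        { unfold Rdiv. repeat apply Rmult_le_pos; try lra; try apply pow2_ge_0. apply Rlt_le, Rinv_0_lt_compat; lra. }
        assert (0 <= Cv * K * E2) by (repeat apply Rmult_le_pos; lra).
        destruct (Rle_lt_dec (Rr / 4) s) as [Hs4|Hs4].
        - specialize (Hr1 Hs4).
          assert (r s ^ 2 / s <= 4 / Rr * r s ^ 2).
          { assert (Hinv : / s <= 4 / Rr) by (replace (4 / Rr) with (/ (Rr / 4)) by (field; lra); apply Rinv_le_contravar; lra).
            replace (4 / Rr * r s ^ 2) with (r s ^ 2 * (4 / Rr)) by ring.
            unfold Rdiv at 1. apply Rmult_le_compat_l; [apply pow2_ge_0|lra]. }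
          assert (r s ^ 2 <= Cv ^ 2 * exp (- (Mt / eps) * (Rr - s))).
          { simpl. rewrite !Rmult_1_r. apply Rle_trans with (Cv * (Cv * exp (- (Mt / eps) * (Rr - s)))).
            - apply Rmult_le_compat; lra.
            - lra. }
          assert (4 / Rr * r s ^ 2 <= 4 / Rr * (Cv ^ 2 * exp (- (Mt / eps) * (Rr - s)))).
          { apply Rmult_le_compat_l; [apply Rlt_le, Rdiv_lt_0_compat|]; lra. }
          lra.
        - specialize (Hr2 ltac:(lra)). fold E2 in Hr2.
          assert (r s ^ 2 / s <= Cv * (K * E2)).
          { replace (r s ^ 2 / s) with (r s * (r s / s)) by (simpl; field; lra).
            apply Rmult_le_compat; try lra.
            - apply Rmult_le_pos; [lra|apply Rlt_le, Rinv_0_lt_compat; lra].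
            - apply Rmult_le_reg_r with s; [lra|]. unfold Rdiv. rewrite Rmult_assoc, Rinv_l by lra. lra. }
          lra. }
      unfold Rdiv at 1. rewrite !Rabs_mult, Rabs_Rinv by lra. rewrite (Rabs_pos_eq s) by lra.
      rewrite (Rabs_pos_eq ((- r s / (eps ^ 2 * g s)) ^ 2)) by apply pow2_ge_0.
      apply Rle_trans with (Cg * (r s ^ 2 / s / (eps ^ 4 * gm ^ 2))).
      + replace (r s ^ 2 / s / (eps ^ 4 * gm ^ 2)) with (/ s * (r s ^ 2 / (eps ^ 4 * gm ^ 2))) by (field; lra).
        rewrite Rmult_assoc. apply Rmult_le_compat; try apply Rabs_pos; auto.
        * apply Rmult_le_pos; [apply Rlt_le, Rinv_0_lt_compat; lra|apply pow2_ge_0].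
        * apply Rmult_le_compat_l; [apply Rlt_le, Rinv_0_lt_compat; lra|exact H1].
      + unfold K1, K0.
        replace (Cg * (4 / Rr * Cv ^ 2) / (eps ^ 4 * gm ^ 2) * exp (- (Mt / eps) * (Rr - s)) + Cg * (Cv * K * E2) / (eps ^ 4 * gm ^ 2))
          with (Cg * ((4 / Rr * Cv ^ 2 * exp (- (Mt / eps) * (Rr - s)) + Cv * K * E2) / (eps ^ 4 * gm ^ 2))) by (field; lra).
        apply Rmult_le_compat_l; [lra|]. apply div_le; lra.
    - assert ((Rr - e) * K0 <= Rr * K0) by (apply Rmult_le_compat_r; lra). lra. }
  assert (HF : Rabs (- (eps ^ 2 / 2) * g e * DU e ^ 2) <= Rr * K ^ 2 / (Mt * gm) / eps).
  { rewrite EDe.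
    assert (Hge0 : 0 < g e) by lra.
    replace (- (eps ^ 2 / 2) * g e * (- r e / (eps ^ 2 * g e)) ^ 2) with (- (r e ^ 2 / (2 * eps ^ 2 * g e))) by (field; lra).
    rewrite Rabs_Ropp, Rabs_pos_eq.
    2:{ unfold Rdiv. apply Rmult_le_pos; [apply pow2_ge_0|]. apply Rlt_le, Rinv_0_lt_compat.
        repeat apply Rmult_lt_0_compat; try apply pow_lt; lra. }
    assert (Hr : r e <= Rr * K * E2).
    { fold E2 in Hre. apply Rle_trans with (1 := Hre). apply Rmult_le_compat_r; [lra|]. apply Rmult_le_compat_r; lra. }
    assert (Hr2 : r e ^ 2 <= (Rr * K) ^ 2 * E2).
    { apply Rle_trans with ((Rr * K * E2) ^ 2); [apply pow_incr; lra|].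
      rewrite Rpow_mult_distr. apply Rmult_le_compat_l; [apply pow2_ge_0|].
      simpl. rewrite Rmult_1_r. rewrite <- (Rmult_1_r E2) at 3. apply Rmult_le_compat_l; lra. }
    assert (Hr3 : r e ^ 2 <= (Rr * K) ^ 2 * (eps / (Mt * Rr / 2))).
    { apply Rle_trans with (1 := Hr2). apply Rmult_le_compat_l; [apply pow2_ge_0|lra]. }
    apply Rle_trans with (r e ^ 2 / (2 * eps ^ 2 * gm)).
    - unfold Rdiv. apply Rmult_le_compat_l; [apply pow2_ge_0|]. apply Rinv_le_contravar.
      + repeat apply Rmult_lt_0_compat; try apply pow_lt; lra.
      + apply Rmult_le_compat_l; [apply Rmult_le_pos; [lra|apply pow_le; lra]|lra].
    - apply Rle_trans with ((Rr * K) ^ 2 * (eps / (Mt * Rr / 2)) / (2 * eps ^ 2 * gm)).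
      + apply div_le; [repeat apply Rmult_lt_0_compat; try apply pow_lt; lra|exact Hr3].
      + apply Req_le. field. repeat split; lra. }
  eapply Rle_trans; [apply Rabs_triang|].
  assert (EA : forall X, Rabs (eps ^ 2 / 2 * X) = eps ^ 2 / 2 * Rabs X).
  { intros X. rewrite Rabs_mult, (Rabs_pos_eq (eps ^ 2 / 2)); auto. apply Rmult_le_pos; [apply pow_le|]; lra. }
  rewrite EA.
  assert (HK0' : Rr * K0 <= Rr * (Cg * (Cv * K * (eps / (Mt * Rr / 2))) / (eps ^ 4 * gm ^ 2))).
  { apply Rmult_le_compat_l; [lra|]. unfold K0. apply div_le; [lra|]. apply Rmult_le_compat_l; [lra|].
    apply Rmult_le_compat_l; [apply Rmult_le_pos; lra|lra]. }
  assert (Hsec : eps ^ 2 / 2 * (K1 / (Mt / eps) + Rr * K0) <=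
     Cg * (4 / Rr * Cv ^ 2 + 2 * Cv * K) / (2 * gm ^ 2 * Mt) / eps).
  { apply Rle_trans with (eps ^ 2 / 2 * (K1 / (Mt / eps) + Rr * (Cg * (Cv * K * (eps / (Mt * Rr / 2))) / (eps ^ 4 * gm ^ 2)))).
    - apply Rmult_le_compat_l; [apply Rmult_le_pos; [apply pow_le|]; lra|lra].
    - apply Req_le. unfold K1. field. repeat split; lra. }
  assert (eps ^ 2 / 2 * Rabs (RInt (fun s => (2 * (INR (S (S n)) - 1) * g s + s * dg s) / s * DU s ^ 2) e Rr)
          <= eps ^ 2 / 2 * (K1 / (Mt / eps) + Rr * K0)).
  { apply Rmult_le_compat_l; [apply Rmult_le_pos; [apply pow_le|]; lra|exact HI]. }
  fold Cg.
  replace ((Rr * K ^ 2 / (Mt * gm) + Cg * (4 / Rr * Cv ^ 2 + 2 * Cv * K) / (2 * gm ^ 2 * Mt)) / eps)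
    with (Rr * K ^ 2 / (Mt * gm) / eps + Cg * (4 / Rr * Cv ^ 2 + 2 * Cv * K) / (2 * gm ^ 2 * Mt) / eps) by (field; lra).
  lra.
Qed.

Lemma cdiv (f g : R -> R) x : continuous f x -> continuous g x -> g x <> 0 -> continuous (fun y => f y / g y) x.
Proof. intros; unfold Rdiv; apply cmul; auto; apply cinv; auto. Qed.

Lemma Rpower_lt_base a b k : 0 < a -> a < b -> 0 < k -> Rpower a k < Rpower b k.
Proof.
  intros Ha Hab Hk. unfold Rpower. apply exp_increasing. apply Rmult_lt_compat_l; auto.
  apply ln_increasing; auto.
Qed.

Theorem lemma3p8 (N : nat) (Rr : R) (g : R -> R) (A B p q kappa gmax : R) :
  (2 <= N)%nat -> 0 < Rr ->
  smooth_on_closed g 0 Rr ->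
  (forall x, 0 <= x <= Rr -> 0 < g x) ->
  0 < A -> A < B -> 0 < p -> 0 < q -> 0 < kappa < 1 ->
  (* gmax = max_{[0,R]} g *)
  (forall x, 0 <= x <= Rr -> g x <= gmax) ->
  (exists x0, 0 <= x0 <= Rr /\ g x0 = gmax) ->
  let Mt := sqrt (A * (p + q) / gmax * Rpower (q / p) ((p - q) / (p + q))) in
  exists C1 C2 C3 eps0 : R,
    0 < C1 /\ 0 < C2 /\ 0 < C3 /\ 0 < eps0 /\
    forall (eps : R) (U : R -> R),
      0 < eps < eps0 ->
      solves_Nstar N Rr g A B p q eps U ->
      RInt (fun s => / s * (Derive U s) ^ 2)
           (Rpower eps kappa) (Rr - Rpower eps kappa)
        <= C1 * exp (- (Mt / (2 * Rpower eps (1 - kappa)))) /\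
      RInt (fun s => (Derive U s) ^ 2) (Rr - Rpower eps kappa) Rr
        <= C2 / (Mt * eps ^ 3) /\
      Rabs (Lambda1 N Rr g U eps) <= C3 / eps /\
      Rabs (Lambda2 N Rr g U eps kappa) <= C3 / eps.
Proof.
  intros HN HR Hsm Hgpos HA HAB Hp Hq Hk Hgmax [x0 [Hx0 Hgx0]] Mt.
  destruct N as [|[|n]]; [lia|lia|]. clear HN.
  destruct Hsm as [dl [Hdl Hsmg]].
  assert (Hgd : forall x, 0 <= x <= Rr -> is_derive g x (Derive g x)).
  { intros x Hx. apply (Derive_correct g). exact (Hsmg 0%nat x ltac:(lra)). }
  assert (Hgc : forall x, 0 <= x <= Rr -> continuity_pt g x) by (intros x Hx; apply (cont_of_der _ _ _ (Hgd x Hx))).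
  assert (Hdgc : forall x, 0 <= x <= Rr -> continuity_pt (Derive g) x).
  { intros x Hx. apply ptc. apply (ex_derive_continuous (K := R_AbsRing) (V := R_NormedModule)). exact (Hsmg 1%nat x ltac:(lra)). }
  destruct (continuity_ab_min g 0 Rr) as [xm [Hgm Hxm]]; [lra|exact Hgc|].
  set (gm := g xm) in *. assert (Hgm0 : 0 < gm) by (apply Hgpos; auto).
  destruct (continuity_ab_maj (fun x => Rabs (Derive g x)) 0 Rr) as [xD [HDg HxD]]; [lra| |].
  { intros c Hc. apply (continuity_pt_comp (Derive g) Rabs c); [apply Hdgc; auto|apply Rcontinuity_abs]. }
  set (Dg := Rabs (Derive g xD)) in *. assert (HDg0 : 0 <= Dg) by apply Rabs_pos.
  assert (Hgmax0 : 0 < gmax) by (rewrite <- Hgx0; apply Hgpos; auto).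
  set (cc := Rpower (q / p) ((p - q) / (p + q))) in *.
  assert (Hcc : 0 < cc) by (unfold cc, Rpower; apply exp_pos).
  assert (Harg : 0 < A * (p + q) / gmax * cc).
  { apply Rmult_lt_0_compat; auto. apply Rdiv_lt_0_compat; auto. apply Rmult_lt_0_compat; lra. }
  assert (HMt : 0 < Mt) by (apply sqrt_lt_R0; exact Harg).
  assert (HMt2 : Mt ^ 2 = A * (p + q) / gmax * cc).
  { simpl. rewrite Rmult_1_r. apply sqrt_sqrt. lra. }
  assert (HNn : 0 < INR (S (S n))) by (apply lt_0_INR; lia).
  set (V0 := Rr ^ S (S n) * (B - A) / INR (S (S n))).
  assert (HV0 : 0 < V0) by (apply Rdiv_lt_0_compat; auto; apply Rmult_lt_0_compat; [apply pow_lt|]; lra).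
  set (K := V0 / (Rr / 4) ^ S (S n)).
  assert (HK : 0 < K) by (apply Rdiv_lt_0_compat; auto; apply pow_lt; lra).
  set (Cv := Rr * K + V0 / (Rr / 4) ^ S n).
  assert (HCv : 0 < Cv).
  { unfold Cv. assert (0 < V0 / (Rr / 4) ^ S n) by (apply Rdiv_lt_0_compat; auto; apply pow_lt; lra).
    assert (0 < Rr * K) by (apply Rmult_lt_0_compat; auto). lra. }
  assert (Hn0 : 0 <= INR n) by apply pos_INR.
  assert (HSn0 : 0 <= INR (S n)) by apply pos_INR.
  set (CL1 := (INR n * gmax + Rr * Dg) * Cv * V0 / (2 * Rr ^ S (S n) * gm ^ 2 * Mt)).
  set (CL2 := Rr * K ^ 2 / (Mt * gm) + (2 * INR (S n) * gmax + Rr * Dg) * (4 / Rr * Cv ^ 2 + 2 * Cv * K) / (2 * gm ^ 2 * Mt)).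
  assert (HCL1 : 0 <= CL1).
  { unfold CL1, Rdiv. apply Rmult_le_pos.
    - apply Rmult_le_pos; [apply Rmult_le_pos|]; try lra.
      apply Rplus_le_le_0_compat; apply Rmult_le_pos; lra.
    - apply Rlt_le, Rinv_0_lt_compat. repeat apply Rmult_lt_0_compat; try apply pow_lt; lra. }
  assert (HCL2 : 0 < CL2).
  { unfold CL2. apply Rplus_lt_le_0_compat.
    - apply Rdiv_lt_0_compat; [apply Rmult_lt_0_compat; [|apply pow_lt]|apply Rmult_lt_0_compat]; lra.
    - unfold Rdiv. apply Rmult_le_pos; [apply Rmult_le_pos|].
      + apply Rplus_le_le_0_compat; repeat apply Rmult_le_pos; lra.
      + apply Rplus_le_le_0_compat; [apply Rmult_le_pos; [apply Rmult_le_pos; [lra|apply Rlt_le, Rinv_0_lt_compat; lra]|apply pow2_ge_0]|].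
        apply Rmult_le_pos; [apply Rmult_le_pos|]; lra.
      + apply Rlt_le, Rinv_0_lt_compat. repeat apply Rmult_lt_0_compat; try apply pow_lt; lra. }
  exists (Rr * Cv ^ 2 / gm ^ 2 * Rpower ((kappa + 4) / (1 - kappa) / (3 / 2 * Mt)) ((kappa + 4) / (1 - kappa))),
         (Cv ^ 2 / gm ^ 2), (CL1 + CL2), (Rmin 1 (Rpower (Rr / 4) (1 / kappa))).
  assert (Hgm2 : 0 < gm ^ 2) by (apply pow_lt; lra).
  split; [|split; [|split; [|split]]].
  - apply Rmult_lt_0_compat; [|unfold Rpower; apply exp_pos].
    apply Rdiv_lt_0_compat; auto. apply Rmult_lt_0_compat; auto. apply pow_lt; lra.
  - apply Rdiv_lt_0_compat; auto. apply pow_lt; lra.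
  - lra.
  - apply Rmin_glb_lt; [lra|unfold Rpower; apply exp_pos].
  - intros eps U [Heps Heps0] Hsol.
    assert (Heps1 : eps < 1) by (apply Rlt_le_trans with (1 := Heps0); apply Rmin_l).
    assert (Heps2 : eps < Rpower (Rr / 4) (1 / kappa)) by (apply Rlt_le_trans with (1 := Heps0); apply Rmin_r).
    set (e := Rpower eps kappa).
    assert (He0 : 0 < e) by (unfold e, Rpower; apply exp_pos).
    assert (He4 : e < Rr / 4).
    { unfold e. replace (Rr / 4) with (Rpower (Rpower (Rr / 4) (1 / kappa)) kappa).
      - apply Rpower_lt_base; lra.
      - rewrite Rpower_mult. replace (1 / kappa * kappa) with 1 by (field; lra). apply Rpower_1. lra. }
    destruct (build n Rr g A B p q eps U HR HA HAB Hp Hq Heps Hgpos Hgd Hsol) as [dU [l1 [l2 [H [HDU [HvR HZ]]]]]].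
    assert (Hk' : forall x, 0 < x < Rr -> Mt ^ 2 * g x <= p * Xf l1 p U x + q * Yf l2 q U x).
    { intros x Hx.
      assert (HX : 0 < Xf l1 p U x) by (unfold Xf; apply Rmult_lt_0_compat; [apply (hl1 _ _ _ _ _ _ _ _ _ _ _ _ H)|apply exp_pos]).
      assert (HY : 0 < Yf l2 q U x) by (unfold Yf; apply Rmult_lt_0_compat; [apply (hl2 _ _ _ _ _ _ _ _ _ _ _ _ H)|apply exp_pos]).
      assert (HL := XY_lower _ _ p q HX HY Hp Hq).
      rewrite XY_const in HL by (try apply (hl1 _ _ _ _ _ _ _ _ _ _ _ _ H); try apply (hl2 _ _ _ _ _ _ _ _ _ _ _ _ H); auto).
      fold cc in HL.
      assert (Hgx : g x <= gmax) by (apply Hgmax; lra).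
      assert (Hgx0' : 0 < g x) by (apply Hgpos; lra).
      apply Rle_trans with (Mt ^ 2 * gmax); [apply Rmult_le_compat_l; [apply pow_le; lra|auto]|].
      rewrite HMt2. replace (A * (p + q) / gmax * cc * gmax) with ((p + q) * cc * A) by (field; lra).
      apply Rle_trans with (2 := HL). apply Rmult_le_compat_l; [apply Rmult_le_pos; lra|exact HZ]. }
    set (r := fun s => vfun n eps g dU s / s ^ S n).
    assert (PW : forall s, 0 < s < Rr ->
      Derive U s = - r s / (eps ^ 2 * g s) /\ 0 <= r s /\ r s <= Cv /\
      (Rr / 4 <= s -> r s <= Cv * exp (- (Mt / eps) * (Rr - s))) /\
      (s <= Rr / 4 -> r s <= s * K * exp (- (Mt / eps) * (Rr / 2))) /\
      r s * s ^ S n <= V0 * exp (- (Mt / eps) * (Rr - s))).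
    { intros s Hs. assert (P := pw n Rr eps l1 l2 p q g U dU Mt H HDU HMt Hk' s Hs).
      cbv zeta in P. rewrite HvR in P. exact P. }
    assert (HdUc := hdUc _ _ _ _ _ _ _ _ _ _ _ _ H).
    assert (Hmu : 0 < Mt / eps) by (apply Rdiv_lt_0_compat; lra).
    split; [|split; [|split]].
    +
      apply (goal1 (Derive U) r g Rr e eps Mt Cv gm kappa); try lra; auto.
      * apply (exRInt_of _ (fun s => / s * dU (clamp Rr s) ^ 2)); [lra| |].
        -- intros s Hs. rewrite HDU, clamp_id; lra.
        -- intros s Hs. apply cmul; [apply cinv; [apply cid|lra]|apply cpow, cpt, HdUc].
      * intros s Hs. destruct (PW s ltac:(lra)) as [E1 [E2 [E3 [E4 [E5 _]]]]].
        split; [exact E1|split; [exact E2|split; [|apply Hgm; lra]]].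
        destruct (Rle_lt_dec (Rr / 4) s) as [Hs4|Hs4].
        -- apply Rle_trans with (1 := E4 Hs4). apply Rmult_le_compat_l; [lra|]. apply exp_le. nra.
        -- apply Rle_trans with (1 := E5 ltac:(lra)).
           assert (exp (- (Mt / eps) * (Rr / 2)) <= exp (- (Mt / eps) * e)) by (apply exp_le; nra).
           assert (s * K <= Cv) by (unfold Cv; assert (0 < V0 / (Rr / 4) ^ S n) by (apply Rdiv_lt_0_compat; auto; apply pow_lt; lra); nra).
           apply Rmult_le_compat; try lra. apply Rmult_le_pos; lra. apply Rlt_le, exp_pos.
    +
      apply (goal2 (Derive U) r g Rr e eps Mt Cv gm); try lra.
      * apply (exRInt_of _ (fun s => dU (clamp Rr s) ^ 2)); [lra| |].
        -- intros s Hs. rewrite HDU, clamp_id; lra.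
        -- intros s Hs. apply cpow, cpt, HdUc.
      * intros s Hs. destruct (PW s ltac:(lra)) as [E1 [E2 [E3 [E4 [E5 _]]]]].
        repeat split; auto. apply E4; lra. apply Hgm; lra.
    +
      unfold Lambda1.
      apply Rle_trans with (CL1 / eps); [|apply div_le; lra].
      apply (goal3 (Derive U) r g (Derive g) n Rr eps Mt Cv gm gmax Dg V0); try lra.
      * apply (exRInt_of _ (fun s => ((INR (S (S n)) - 2) * g s + s * Derive g s) / Rr ^ S (S n) * s ^ (S (S n) - 1) * dU (clamp Rr s) ^ 2)); [lra| |].
        -- intros s Hs. rewrite HDU, clamp_id; lra.
        -- intros s Hs. apply cmul; [apply cmul|apply cpow, cpt, HdUc].
           ++ apply cdiv; [|apply cconst|apply pow_nonzero; lra].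
              apply cplus; [apply cmul; [apply cconst|apply cpt, Hgc; lra]|apply cmul; [apply cid|apply cpt, Hdgc; lra]].
           ++ apply cpow, cid.
      * intros s Hs. destruct (PW s Hs) as [E1 [E2 [E3 [E4 [E5 E6]]]]].
        repeat split; auto. apply Hgm; lra. apply Hgmax; lra. apply HDg; lra.
    +
      unfold Lambda2. fold e.
      apply Rle_trans with (CL2 / eps); [|apply div_le; lra].
      destruct (PW e ltac:(lra)) as [E1 [E2 [E3 [E4 [E5 E6]]]]].
      apply (goal4 (Derive U) r g (Derive g) n Rr eps Mt Cv gm gmax Dg K e); try lra; auto.
      * apply Hgm; lra.
      * apply (exRInt_of _ (fun s => (2 * (INR (S (S n)) - 1) * g s + s * Derive g s) / s * dU (clamp Rr s) ^ 2)); [lra| |].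
        -- intros s Hs. rewrite HDU, clamp_id; lra.
        -- intros s Hs. apply cmul; [|apply cpow, cpt, HdUc].
           apply cdiv; [|apply cid|lra].
           apply cplus; [apply cmul; [apply cconst|apply cpt, Hgc; lra]|apply cmul; [apply cid|apply cpt, Hdgc; lra]].
      * intros s Hs. destruct (PW s ltac:(lra)) as [F1 [F2 [F3 [F4 [F5 F6]]]]].
        repeat split; auto. apply Hgm; lra. apply Hgmax; lra. apply HDg; lra.
Qed.
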